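(* Let $N\ge3$ and $m>2-\frac2N$. For every $M>0$ there exists a unique $\alpha=\alpha(M)>0$ such that the Lane–Emden solution $\psi$ with $\psi(0)=\alpha$ satisfies $$\omega_{N-1}\int_0^{R_*(\alpha)}\psi^{\frac{1}{m-1}}(s)\,s^{N-1}\,ds=M.$$
   Context: $\omega_{N-1}$ is the area of the unit sphere $S^{N-1}\subset\mathbb{R}^N$. For $\alpha>0$, $\psi$ denotes the unique solution of $\psi''+\frac{N-1}{r}\psi'=-\frac{m-1}{m}\psi^{1/(m-1)}$, $\psi(0)=\alpha$, $\psi'(0)=0$, positive and decreasing on $(0,R_*(\alpha))$, where $R_*(\alpha)\in(0,\infty)$ is the first zero of $\psi$ (the maximal radius on which the positive solution exists). *)

(* Defs.v *)
From Stdlib Require Import Reals Lra.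
Open Scope R_scope.

(* Real power with the convention x^y = 0 for x <= 0 (only used for y > 0);
   Stdlib's Rpower 0 y would be 1. *)
Definition rpow (x y : R) : R := if Rlt_dec 0 x then Rpower x y else 0.

(* sphere_area N = area of the unit sphere S^(N-1) in R^N,
   i.e. 2 pi^(N/2) / Gamma(N/2):  A(1)=2, A(2)=2pi, A(N+2) = 2pi/N * A(N). *)
Fixpoint sphere_area (N : nat) : R :=
  match N with
  | O => 0
  | S O => 2
  | S (S O) => 2 * PI
  | S (S k as N') => 2 * PI / INR k * sphere_area k
  end.

Definition lane_emden_sol (N : nat) (m alpha : R) (psi : R -> R) (Rs : R) : Prop :=
  0 < Rs /\
  psi 0 = alpha /\
  (* psi'(0) = 0 (one-sided derivative at 0, implies right-continuity) *)
  (forall eps, 0 < eps -> exists delta, 0 < delta /\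
      forall r, 0 < r < delta -> Rabs ((psi r - alpha) / r) < eps) /\
  psi Rs = 0 /\
  (forall eps, 0 < eps -> exists delta, 0 < delta /\
      forall r, Rs - delta < r < Rs -> Rabs (psi r - psi Rs) < eps) /\
  (forall r, 0 <= r < Rs -> 0 < psi r) /\
  (forall r1 r2, 0 < r1 -> r1 < r2 -> r2 < Rs -> psi r2 < psi r1) /\
  exists dpsi ddpsi : R -> R,
    forall r, 0 < r < Rs ->
      derivable_pt_lim psi r (dpsi r) /\
      derivable_pt_lim dpsi r (ddpsi r) /\
      ddpsi r + (INR N - 1) / r * dpsi r = - ((m - 1) / m) * rpow (psi r) (1 / (m - 1)).

Definition mass_integrand (N : nat) (m : R) (psi : R -> R) (s : R) : R :=
  rpow (psi s) (1 / (m - 1)) * s ^ (N - 1).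

(* Main.v *)
Require Import Defs.
From Stdlib Require Import Reals Lra Lia Classical.
From Coquelicot Require Import Coquelicot.
From Stdlib Require Import Factorial ZArith IndefiniteDescription.
Open Scope R_scope.

Definition vanish0 (h : R -> R) : Prop :=
  forall eps, 0 < eps -> exists d, 0 < d /\ forall t, 0 < t < d -> Rabs (h t) < eps.

Lemma decr_deriv (h h' : R -> R) a b :
  (forall x, a < x < b -> derivable_pt_lim h x (h' x)) ->
  (forall x, a < x < b -> h' x <= 0) ->
  forall s t, a < s -> s <= t -> t < b -> h t <= h s.
Proof.
  intros Hd Hn s t Ha Hst Hb.
  destruct (Req_dec s t) as [->|Hne]; [lra|].
  destruct (MVT_cor2 h h' s t) as [x [Hx1 Hx2]]; [lra| |].
  - intros x Hx; apply Hd; lra.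
  - assert (h' x <= 0) by (apply Hn; lra).
    assert (h' x * (t - s) <= 0) by (apply Rmult_le_0_r; lra). lra.
Qed.

Lemma incr_deriv (h h' : R -> R) a b :
  (forall x, a < x < b -> derivable_pt_lim h x (h' x)) ->
  (forall x, a < x < b -> 0 <= h' x) ->
  forall s t, a < s -> s <= t -> t < b -> h s <= h t.
Proof.
  intros Hd Hn s t Ha Hst Hb.
  assert (- h t <= - h s); [|lra].
  apply (decr_deriv (fun x => - h x) (fun x => - h' x) a b); auto.
  - intros x Hx; apply derivable_pt_lim_opp; auto.
  - intros x Hx; specialize (Hn x Hx); lra.
Qed.

Lemma lim0_le (h : R -> R) r : 0 < r -> (forall t, 0 < t < r -> h r <= h t) ->
  vanish0 h -> h r <= 0.
Proof.
  intros Hr Hm Hv.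
  destruct (Rle_dec (h r) 0) as [|Hc]; [auto|].
  destruct (Hv (h r)) as [d [Hd Ht]]; [lra|].
  set (t := Rmin d r / 2).
  assert (0 < Rmin d r) by (apply Rmin_pos; lra).
  assert (Rmin d r <= d) by apply Rmin_l.
  assert (Rmin d r <= r) by apply Rmin_r.
  assert (0 < t < d) by (unfold t; lra).
  specialize (Ht t H2). specialize (Hm t ltac:(unfold t; lra)).
  apply Rabs_def2 in Ht. lra.
Qed.

Lemma vanish_plus f g : vanish0 f -> vanish0 g -> vanish0 (fun t => f t + g t).
Proof.
  intros Hf Hg eps He.
  destruct (Hf (eps/2)) as [d1 [Hd1 H1]]; [lra|].
  destruct (Hg (eps/2)) as [d2 [Hd2 H2]]; [lra|].
  exists (Rmin d1 d2); split; [apply Rmin_pos; lra|].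
  intros t Ht. assert (Rmin d1 d2 <= d1) by apply Rmin_l. assert (Rmin d1 d2 <= d2) by apply Rmin_r.
  specialize (H1 t ltac:(lra)). specialize (H2 t ltac:(lra)).
  eapply Rle_lt_trans; [apply Rabs_triang|]. lra.
Qed.

Lemma vanish_opp f : vanish0 f -> vanish0 (fun t => - f t).
Proof.
  intros Hf eps He. destruct (Hf eps He) as [d [Hd H]]. exists d; split; auto.
  intros t Ht; rewrite Rabs_Ropp; auto.
Qed.

Lemma vanish_ext f g : (forall t, 0 < t -> f t = g t) -> vanish0 f -> vanish0 g.
Proof.
  intros E Hf eps He. destruct (Hf eps He) as [d [Hd H]]. exists d; split; auto.
  intros t Ht; rewrite <- E by lra; auto.
Qed.

Lemma vanish_pow C k : (1 <= k)%nat -> vanish0 (fun t => C * t ^ k).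
Proof.
  intros Hk eps He.
  exists (Rmin 1 (eps / (Rabs C + 1))); split.
  { apply Rmin_pos; [lra|]. apply Rdiv_lt_0_compat; [lra|]. pose proof (Rabs_pos C); lra. }
  intros t Ht.
  assert (Rmin 1 (eps / (Rabs C + 1)) <= 1) by apply Rmin_l.
  assert (Rmin 1 (eps / (Rabs C + 1)) <= eps / (Rabs C + 1)) by apply Rmin_r.
  assert (Htk : t ^ k <= t).
  { destruct k; [lia|]. change (t ^ S k) with (t * t ^ k). apply Rle_trans with (t * 1); [|lra].
    apply Rmult_le_compat_l; [lra|]. rewrite <- (pow1 k). apply pow_incr; lra. }
  assert (0 <= t ^ k) by (apply pow_le; lra).
  rewrite Rabs_mult, (Rabs_right (t^k)) by lra.
  assert (Rabs C * t ^ k <= (Rabs C + 1) * t).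
  { pose proof (Rabs_pos C). apply Rmult_le_compat; lra. }
  assert ((Rabs C + 1) * t < (Rabs C + 1) * (eps / (Rabs C + 1))).
  { apply Rmult_lt_compat_l; [pose proof (Rabs_pos C); lra|lra]. }
  assert ((Rabs C + 1) * (eps / (Rabs C + 1)) = eps) by (field; pose proof (Rabs_pos C); lra).
  lra.
Qed.

Lemma int_bound (h h' : R -> R) b K j :
  0 <= K ->
  (forall t, 0 < t < b -> derivable_pt_lim h t (h' t)) ->
  (forall t, 0 < t < b -> Rabs (h' t) <= K * t ^ j) ->
  vanish0 h ->
  forall r, 0 < r < b -> Rabs (h r) <= K * r ^ (S j) / INR (S j).
Proof.
  intros HK Hd Hb Hv r Hr.
  assert (HS : 0 < INR (S j)) by (apply lt_0_INR; lia).
  assert (Hder : forall t, derivable_pt_lim (fun t => K / INR (S j) * t ^ (S j)) t (K * t ^ j)).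
  { intros t. replace (K * t ^ j) with (K / INR (S j) * (INR (S j) * t ^ pred (S j))).
    - apply derivable_pt_lim_scal. apply derivable_pt_lim_pow.
    - simpl pred. field. lra. }
  assert (Hv2 : vanish0 (fun t => - (K / INR (S j)) * t ^ S j)) by (apply vanish_pow; lia).
  assert (H1 : h r - K / INR (S j) * r ^ S j <= 0).
  { apply (lim0_le (fun t => h t - K / INR (S j) * t ^ S j)); [lra| |].
    - intros t Ht. apply (decr_deriv (fun t => h t - K / INR (S j) * t ^ S j) (fun t => h' t - K * t ^ j) 0 b).
      + intros x Hx. apply derivable_pt_lim_minus; auto.
      + intros x Hx. specialize (Hb x Hx). apply Rabs_le_between in Hb. lra.
      + lra. + lra. + lra.
    - eapply vanish_ext; [|apply (vanish_plus _ _ Hv Hv2)]. intros t _; simpl; ring. }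
  assert (H2 : - h r - K / INR (S j) * r ^ S j <= 0).
  { apply (lim0_le (fun t => - h t - K / INR (S j) * t ^ S j)); [lra| |].
    - intros t Ht. apply (decr_deriv (fun t => - h t - K / INR (S j) * t ^ S j) (fun t => - h' t - K * t ^ j) 0 b).
      + intros x Hx. apply derivable_pt_lim_minus; auto. apply derivable_pt_lim_opp; auto.
      + intros x Hx. specialize (Hb x Hx). apply Rabs_le_between in Hb. lra.
      + lra. + lra. + lra.
    - eapply vanish_ext; [|apply (vanish_plus _ _ (vanish_opp _ Hv) Hv2)]. intros t _; simpl; ring. }
  unfold Rdiv in *. apply Rabs_le. split; lra.
Qed.

Lemma deriv_e (k : nat) (c b : R) (d1 d2 dd1 dd2 G1 G2 : R -> R) r :
  0 < r ->
  derivable_pt_lim d1 r (dd1 r) -> dd1 r + (INR (S (S (S k))) - 1) / r * d1 r = - c * G1 r ->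
  derivable_pt_lim d2 r (dd2 r) -> dd2 r + (INR (S (S (S k))) - 1) / r * d2 r = - c * G2 r ->
  derivable_pt_lim (fun t => t ^ (S (S k)) * (d1 t - d2 t)) r (- c * r ^ (S (S k)) * (G1 r - G2 r)).
Proof.
  intros Hr Hd1 E1 Hd2 E2.
  replace (- c * r ^ (S (S k)) * (G1 r - G2 r)) with
    (INR (S (S k)) * r ^ pred (S (S k)) * (d1 r - d2 r) + r ^ (S (S k)) * (dd1 r - dd2 r)).
  - apply (derivable_pt_lim_mult (fun t => t ^ S (S k)) (fun t => d1 t - d2 t)).
    + apply derivable_pt_lim_pow.
    + apply derivable_pt_lim_minus; auto.
  - assert (dd1 r = - c * G1 r - (INR (S (S (S k))) - 1) / r * d1 r) by lra.
    assert (dd2 r = - c * G2 r - (INR (S (S (S k))) - 1) / r * d2 r) by lra.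
    rewrite H, H0. simpl pred. change (r ^ S (S k)) with (r * r ^ (S k)).
    rewrite (S_INR (S (S k))). field. lra.
Qed.

Lemma gronwall (N : nat) (c L b B0 : R) (u1 u2 d1 d2 dd1 dd2 G1 G2 : R -> R) :
  (3 <= N)%nat -> 0 <= c -> 0 <= L ->
  (forall r, 0 < r < b -> derivable_pt_lim u1 r (d1 r) /\ derivable_pt_lim d1 r (dd1 r) /\
      dd1 r + (INR N - 1) / r * d1 r = - c * G1 r) ->
  (forall r, 0 < r < b -> derivable_pt_lim u2 r (d2 r) /\ derivable_pt_lim d2 r (dd2 r) /\
      dd2 r + (INR N - 1) / r * d2 r = - c * G2 r) ->
  (forall r, 0 < r < b -> Rabs (G1 r - G2 r) <= L * Rabs (u1 r - u2 r)) ->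
  (forall r, 0 < r < b -> Rabs (u1 r - u2 r) <= B0) ->
  vanish0 (fun r => u1 r - u2 r) ->
  vanish0 (fun r => r ^ (N - 1) * (d1 r - d2 r)) ->
  forall r, 0 < r < b -> u1 r = u2 r.
Proof.
  intros HN Hc HL H1 H2 HG HB Hv Hve.
  assert (exists k, N = S (S (S k))) as [k ->] by (exists (N-3)%nat; lia).
  replace (S (S (S k)) - 1)%nat with (S (S k)) in Hve by lia.
  assert (He : forall t, 0 < t < b -> derivable_pt_lim (fun t => t ^ (S (S k)) * (d1 t - d2 t)) t
             (- c * t ^ (S (S k)) * (G1 t - G2 t))).
  { intros t Ht. destruct (H1 t Ht) as [_ [A1 B1]]. destruct (H2 t Ht) as [_ [A2 B2]].
    apply (deriv_e k c b d1 d2 dd1 dd2 G1 G2); auto; lra. }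
  assert (Hd : forall t, 0 < t < b -> derivable_pt_lim (fun t => u1 t - u2 t) t (d1 t - d2 t)).
  { intros t Ht. destruct (H1 t Ht) as [A1 _]. destruct (H2 t Ht) as [A2 _].
    apply derivable_pt_lim_minus; auto. }
  assert (P : forall n r, 0 < r < b ->
     Rabs (u1 r - u2 r) <= B0 * (c * L) ^ n * r ^ (2 * n) / INR (fact n)).
  { induction n as [|n IH]; intros r Hr.
    - replace (B0 * (c * L) ^ 0 * r ^ (2 * 0) / INR (fact 0)) with B0 by (simpl; field). auto.
    - set (B := B0 * (c * L) ^ n / INR (fact n)).
      assert (IH' : forall t, 0 < t < b -> Rabs (u1 t - u2 t) <= B * t ^ (2 * n)).
      { intros t Ht. specialize (IH t Ht). unfold B. unfold Rdiv in *. lra. }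
      assert (HB0 : 0 <= B).
      { specialize (IH' r Hr). pose proof (Rabs_pos (u1 r - u2 r)).
        assert (0 < r ^ (2 * n)) by (apply pow_lt; lra).
        destruct (Rle_dec 0 B) as [|HH]; auto. exfalso.
        assert (B * r ^ (2 * n) < 0) by (apply Rmult_neg_pos; lra). lra. }
      assert (HK : 0 <= c * L * B) by (apply Rmult_le_pos; [apply Rmult_le_pos|]; auto).
      assert (Eb : forall t, 0 < t < b -> Rabs (t ^ (S (S k)) * (d1 t - d2 t)) <=
               c * L * B * t ^ (S (S (S k) + 2 * n)) / INR (S (S (S k) + 2 * n))).
      { apply (int_bound _ (fun t => - c * t ^ (S (S k)) * (G1 t - G2 t)) b); auto.
        intros t Ht. rewrite pow_add.
        assert (0 < t ^ (S (S k))) by (apply pow_lt; lra).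
        rewrite !Rabs_mult, Rabs_Ropp, (Rabs_right c), (Rabs_right (t ^ S (S k))) by lra.
        specialize (HG t Ht). specialize (IH' t Ht).
        assert (Rabs (G1 t - G2 t) <= L * (B * t ^ (2 * n))).
        { eapply Rle_trans; [apply HG|]. apply Rmult_le_compat_l; auto. }
        assert (0 <= Rabs (G1 t - G2 t)) by apply Rabs_pos.
        assert (c * t ^ S (S k) * Rabs (G1 t - G2 t) <= c * t ^ S (S k) * (L * (B * t ^ (2 * n)))).
        { apply Rmult_le_compat_l; auto. apply Rmult_le_pos; lra. }
        lra. }
      assert (Ed : forall t, 0 < t < b -> Rabs (u1 t - u2 t) <=
               c * L * B * t ^ (S (2 * n + 1)) / INR (S (2 * n + 1))).
      { apply (int_bound _ (fun t => d1 t - d2 t) b); auto.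
        intros t Ht. specialize (Eb t Ht).
        assert (Hp : 0 < t ^ (S (S k))) by (apply pow_lt; lra).
        rewrite Rabs_mult, (Rabs_right (t ^ S (S k))) in Eb by lra.
        assert (HI : 1 <= INR (S (S (S k) + 2 * n))).
        { rewrite <- INR_1. apply le_INR. lia. }
        replace (t ^ (S (S (S k) + 2 * n))) with (t ^ (S (S k)) * t ^ (2 * n + 1)) in Eb
          by (rewrite <- pow_add; f_equal; lia).
        assert (0 <= t ^ (2 * n + 1)) by (apply pow_le; lra).
        assert (Rabs (d1 t - d2 t) <= c * L * B * t ^ (2 * n + 1) / INR (S (S (S k) + 2 * n))).
        { apply (Rmult_le_reg_l (t ^ S (S k))); auto. unfold Rdiv in *. lra. }
        eapply Rle_trans; [apply H0|].
        unfold Rdiv. rewrite <- (Rmult_1_r (c * L * B * t ^ (2 * n + 1))) at 2.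
        apply Rmult_le_compat_l; [apply Rmult_le_pos; auto|].
        rewrite <- Rinv_1. apply Rinv_le_contravar; lra. }
      specialize (Ed r Hr). eapply Rle_trans; [apply Ed|].
      replace (B0 * (c * L) ^ S n * r ^ (2 * S n) / INR (fact (S n))) with
        (c * L * B * r ^ (S (2 * n + 1)) / INR (S n)).
      + assert (0 <= c * L * B * r ^ S (2 * n + 1)) by (apply Rmult_le_pos; auto; apply pow_le; lra).
        unfold Rdiv. apply Rmult_le_compat_l; auto.
        apply Rinv_le_contravar; [apply lt_0_INR; lia|]. apply le_INR; lia.
      + unfold B. replace (2 * S n)%nat with (S (2 * n + 1)) by lia.
        rewrite fact_simpl, mult_INR. simpl pow.
        assert (INR (fact n) <> 0) by (apply not_0_INR; apply fact_neq_0).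
        assert (INR (S n) <> 0) by (apply not_0_INR; lia).
        field. auto. }
  intros r Hr.
  assert (Hz : forall eps, 0 < eps -> Rabs (u1 r - u2 r) < eps).
  { intros eps Heps.
    destruct (cv_speed_pow_fact (c * L * r ^ 2) (eps / (Rabs B0 + 1))) as [n0 Hn0].
    { apply Rdiv_lt_0_compat; [lra|pose proof (Rabs_pos B0); lra]. }
    specialize (Hn0 n0 (le_n _)). unfold Rdist in Hn0. rewrite Rminus_0_r in Hn0.
    specialize (P n0 r Hr).
    replace (B0 * (c * L) ^ n0 * r ^ (2 * n0) / INR (fact n0)) with
      (B0 * ((c * L * r ^ 2) ^ n0 / INR (fact n0))) in P
      by (rewrite pow_mult, Rpow_mult_distr; field; apply not_0_INR; apply fact_neq_0).
    eapply Rle_lt_trans; [apply P|].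
    eapply Rle_lt_trans; [apply Rle_abs|]. rewrite Rabs_mult.
    pose proof (Rabs_pos B0).
    apply Rle_lt_trans with ((Rabs B0 + 1) * Rabs ((c * L * r ^ 2) ^ n0 / INR (fact n0))).
    { apply Rmult_le_compat_r; [apply Rabs_pos|lra]. }
    apply Rlt_le_trans with ((Rabs B0 + 1) * (eps / (Rabs B0 + 1))).
    { apply Rmult_lt_compat_l; lra. }
    right. field. lra. }
  destruct (Req_dec (u1 r - u2 r) 0) as [|Hne]; [lra|].
  exfalso. specialize (Hz _ (Rabs_pos_lt _ Hne)). lra.
Qed.

Lemma rpow_pos_eq x p : 0 < x -> rpow x p = Rpower x p.
Proof. intros H. unfold rpow. destruct (Rlt_dec 0 x); [auto|lra]. Qed.

Lemma rpow_nonpos x p : x <= 0 -> rpow x p = 0.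
Proof. intros H. unfold rpow. destruct (Rlt_dec 0 x); [lra|auto]. Qed.

Lemma Rpower_pos' x p : 0 < Rpower x p.
Proof. unfold Rpower. apply exp_pos. Qed.

Lemma rpow_ge0 x p : 0 <= rpow x p.
Proof. unfold rpow. destruct (Rlt_dec 0 x); [left; apply Rpower_pos'|lra]. Qed.

Lemma Rpower_bound_exp z e d A : 0 < d -> d <= z <= A ->
  Rpower z e <= Rpower d e + Rpower A e.
Proof.
  intros Hd Hz.
  pose proof (Rpower_pos' d e). pose proof (Rpower_pos' A e).
  destruct (Rle_dec 0 e).
  - assert (Rpower z e <= Rpower A e) by (apply Rle_Rpower_l; lra). lra.
  - assert (E : forall x, Rpower x e = / Rpower x (-e)) by (intro; rewrite <- Rpower_Ropp; f_equal; ring).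
    rewrite !(E z), (E d), (E A).
    pose proof (Rpower_pos' d (-e)). pose proof (Rpower_pos' A (-e)).
    pose proof (Rpower_pos' z (-e)).
    assert (Rpower d (-e) <= Rpower z (-e)) by (apply Rle_Rpower_l; lra).
    assert (/ Rpower z (- e) <= / Rpower d (- e)) by (apply Rinv_le_contravar; lra).
    assert (0 < / Rpower A (-e)) by (apply Rinv_0_lt_compat; auto). lra.
Qed.

Lemma Rpower_lip p d A x y : 0 < p -> 0 < d -> d <= x <= A -> d <= y <= A ->
  Rabs (Rpower x p - Rpower y p) <= p * (Rpower d (p-1) + Rpower A (p-1)) * Rabs (x - y).
Proof.
  intros Hp Hd Hx Hy.
  assert (Hgen : forall a b, d <= a <= A -> d <= b <= A -> a < b ->
     Rabs (Rpower a p - Rpower b p) <= p * (Rpower d (p-1) + Rpower A (p-1)) * Rabs (a - b)).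
  { intros a b Ha Hb Hab.
    destruct (MVT_cor2 (fun x => Rpower x p) (fun x => p * Rpower x (p - 1)) a b) as [z [Hz1 Hz2]]; auto.
    { intros z Hz. apply derivable_pt_lim_power. lra. }
    rewrite <- Rabs_Ropp. replace (- (Rpower a p - Rpower b p)) with (Rpower b p - Rpower a p) by ring.
    rewrite Hz1, Rabs_mult. rewrite <- (Rabs_Ropp (a - b)). replace (- (a - b)) with (b - a) by ring.
    apply Rmult_le_compat_r; [apply Rabs_pos|].
    rewrite Rabs_right.
    - apply Rmult_le_compat_l; [lra|]. apply Rpower_bound_exp; lra.
    - pose proof (Rpower_pos' z (p - 1)). apply Rle_ge, Rmult_le_pos; lra. }
  destruct (Rtotal_order x y) as [H|[H|H]].
  - auto.
  - subst. rewrite !Rminus_diag, Rabs_R0. lra.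
  - rewrite Rabs_minus_sym, (Rabs_minus_sym x). auto.
Qed.

Lemma deriv_g (k : nat) (c : R) (d dd G : R -> R) r :
  0 < r ->
  derivable_pt_lim d r (dd r) -> dd r + (INR (S (S (S k))) - 1) / r * d r = - c * G r ->
  derivable_pt_lim (fun t => t ^ (S (S k)) * d t) r (- c * r ^ (S (S k)) * G r).
Proof.
  intros Hr Hd1 E1.
  replace (- c * r ^ (S (S k)) * G r) with
    (INR (S (S k)) * r ^ pred (S (S k)) * d r + r ^ (S (S k)) * dd r).
  - apply (derivable_pt_lim_mult (fun t => t ^ S (S k)) d).
    + apply derivable_pt_lim_pow.
    + auto.
  - assert (dd r = - c * G r - (INR (S (S (S k))) - 1) / r * d r) by lra.
    rewrite H. simpl pred. change (r ^ S (S k)) with (r * r ^ (S k)).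
    rewrite (S_INR (S (S k))). field. lra.
Qed.

Lemma deriv_inv_eps (e s : R) : 0 < s -> derivable_pt_lim (fun s => - (e / s)) s (e / s ^ 2).
Proof.
  intros Hs. apply is_derive_Reals. auto_derive. lra. field. lra.
Qed.

Lemma g_vanish (N : nat) (c Rb K : R) (u d dd G : R -> R) :
  (3 <= N)%nat -> 0 <= c ->
  (forall r, 0 < r < Rb -> derivable_pt_lim u r (d r) /\ derivable_pt_lim d r (dd r) /\
      dd r + (INR N - 1) / r * d r = - c * G r) ->
  (forall r, 0 < r < Rb -> 0 <= G r) ->
  (forall r, 0 < r < Rb -> 0 < u r <= K) ->
  (forall r1 r2, 0 < r1 -> r1 < r2 -> r2 < Rb -> u r2 < u r1) -> 0 < Rb ->
  vanish0 (fun r => r ^ (N - 1) * d r).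
Proof.
  intros HN Hc Hode HG Hu Hdec HR.
  assert (exists k, N = S (S (S k))) as [k ->] by (exists (N-3)%nat; lia).
  replace (S (S (S k)) - 1)%nat with (S (S k)) by lia.
  set (g := fun t => t ^ S (S k) * d t).
  assert (Hg' : forall t, 0 < t < Rb -> derivable_pt_lim g t (- c * t ^ (S (S k)) * G t)).
  { intros t Ht. destruct (Hode t Ht) as [_ [A B]]. apply (deriv_g k c d dd G); auto; lra. }
  assert (Hgdec : forall s t, 0 < s -> s <= t -> t < Rb -> g t <= g s).
  { apply (decr_deriv g (fun t => - c * t ^ (S (S k)) * G t)); auto.
    intros x Hx. assert (0 < x ^ S (S k)) by (apply pow_lt; lra).
    specialize (HG x Hx). assert (0 <= c * x ^ S (S k) * G x) by (apply Rmult_le_pos; [apply Rmult_le_pos|]; lra).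
    replace (- c * x ^ S (S k) * G x) with (- (c * x ^ S (S k) * G x)) by ring; lra. }
  assert (Hgneg : forall t, 0 < t < Rb -> g t <= 0).
  { intros t0 Ht0. destruct (Rle_dec (g t0) 0) as [|Hpos]; auto. exfalso.
    assert (Hdp : forall x, 0 < x < t0 -> 0 <= d x).
    { intros x Hx. assert (g t0 <= g x) by (apply Hgdec; lra).
      unfold g in *. assert (0 < x ^ S (S k)) by (apply pow_lt; lra).
      destruct (Rle_dec 0 (d x)) as [|Hn]; auto.
      assert (x ^ S (S k) * d x < 0) by (apply Rmult_pos_neg; lra). lra. }
    assert (u (t0/4) <= u (t0/2)).
    { apply (incr_deriv u d 0 t0); try lra.
      - intros x Hx. apply (Hode x). lra.
      - auto. }
    assert (u (t0/2) < u (t0/4)) by (apply Hdec; lra). lra. }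
  destruct (classic (exists eps, 0 < eps /\ forall s, 0 < s < Rb -> g s <= - eps)) as [[eps [He Hall]]|Hno].
  - exfalso.
    set (Rq := Rmin Rb 1).
    assert (HRq : 0 < Rq) by (unfold Rq; apply Rmin_pos; lra).
    assert (HRq1 : Rq <= Rb) by apply Rmin_l. assert (HRq2 : Rq <= 1) by apply Rmin_r.
    assert (Hd2 : forall s, 0 < s < Rq -> d s + eps / s ^ 2 <= 0).
    { intros s Hs. specialize (Hall s ltac:(lra)). unfold g in Hall.
      assert (Hsk : s ^ k <= 1) by (rewrite <- (pow1 k); apply pow_incr; lra).
      assert (Hsk0 : 0 < s ^ k) by (apply pow_lt; lra).
      change (s ^ S (S k)) with (s * (s * s ^ k)) in Hall.
      assert (Hs2 : 0 < s ^ 2) by (apply pow_lt; lra).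
      assert (Hds : d s < 0).
      { destruct (Rlt_dec (d s) 0); auto. assert (0 <= s * (s * s ^ k) * d s).
        { apply Rmult_le_pos; [|lra]. apply Rmult_le_pos; [lra|]. apply Rmult_le_pos; lra. } lra. }
      assert (s ^ 2 * d s <= s * (s * s ^ k) * d s).
      { assert (0 <= (1 - s ^ k) * (- d s)) by (apply Rmult_le_pos; lra).
        assert (0 <= s ^ 2 * ((1 - s ^ k) * (- d s))) by (apply Rmult_le_pos; lra).
        replace (s * (s * s ^ k) * d s) with (s ^ 2 * d s + s ^ 2 * ((1 - s ^ k) * (- d s))) by ring.
        lra. }
      assert (s ^ 2 * (d s + eps / s ^ 2) <= 0).
      { replace (s ^ 2 * (d s + eps / s ^ 2)) with (s ^ 2 * d s + eps) by (field; lra). lra. }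
      destruct (Rle_dec (d s + eps / s ^ 2) 0); auto.
      assert (0 < s ^ 2 * (d s + eps / s ^ 2)) by (apply Rmult_lt_0_compat; lra). lra. }
    set (r := Rq / 2).
    assert (HF : forall s, 0 < s -> s <= r -> (u r - eps / r) <= (u s - eps / s)).
    { intros s Hs Hsr.
      apply (decr_deriv (fun s => u s + - (eps / s)) (fun s => d s + eps / s ^ 2) 0 Rq); auto; try (unfold r; lra).
      - intros x Hx. apply derivable_pt_lim_plus.
        + apply (Hode x). lra.
        + apply deriv_inv_eps. lra. }
    assert (Hur : 0 < u r) by (apply Hu; unfold r; lra).
    assert (HK : 0 < K) by (destruct (Hu r ltac:(unfold r; lra)); lra).
    set (Q := K + eps / r + 1).
    assert (HQ : 0 < Q) by (unfold Q; assert (0 < eps / r) by (apply Rdiv_lt_0_compat; unfold r; lra); lra).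
    set (s := Rmin (r / 2) (eps / Q)).
    assert (Hs0 : 0 < s) by (unfold s; apply Rmin_pos; [unfold r; lra|apply Rdiv_lt_0_compat; lra]).
    assert (Hs1 : s <= r / 2) by apply Rmin_l. assert (Hs2 : s <= eps / Q) by apply Rmin_r.
    assert (Hes : Q <= eps / s).
    { apply (Rmult_le_reg_r s); auto. unfold Rdiv. rewrite Rmult_assoc, Rinv_l by lra.
      apply (Rmult_le_reg_r (/ Q)); [apply Rinv_0_lt_compat; lra|].
      replace (Q * s * / Q) with s by (field; lra). lra. }
    specialize (HF s Hs0 ltac:(unfold r in *; lra)).
    destruct (Hu s ltac:(unfold r in *; lra)). unfold Q in Hes. lra.
  - intros eps He.
    assert (exists s, 0 < s < Rb /\ - eps < g s) as [s0 [Hs0 Hgs0]].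
    { apply NNPP. intros Hn. apply Hno. exists eps. split; auto. intros s Hs.
      destruct (Rle_dec (g s) (- eps)); auto. exfalso. apply Hn. exists s. split; auto. lra. }
    exists s0. split; [lra|]. intros t Ht.
    assert (g s0 <= g t) by (apply Hgdec; lra).
    assert (g t <= 0) by (apply Hgneg; lra).
    change (Rabs (g t) < eps). rewrite Rabs_left1 by lra. lra.
Qed.

Lemma le_basic N m a psi Rs : (3 <= N)%nat -> 1 < m -> 0 < a ->
  lane_emden_sol N m a psi Rs ->
  (forall r, 0 < r < Rs -> 0 < psi r <= a) /\ vanish0 (fun r => psi r - a) /\
  exists dpsi ddpsi : R -> R,
    (forall r, 0 < r < Rs ->
      derivable_pt_lim psi r (dpsi r) /\
      derivable_pt_lim dpsi r (ddpsi r) /\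
      ddpsi r + (INR N - 1) / r * dpsi r = - ((m - 1) / m) * rpow (psi r) (1 / (m - 1))) /\
    vanish0 (fun r => r ^ (N - 1) * dpsi r).
Proof.
  intros HN Hm Ha [HRs [H0 [Hd0 [HR [HRc [Hpos [Hdec [dpsi [ddpsi Hode]]]]]]]]].
  assert (Hv : vanish0 (fun r => psi r - a)).
  { intros eps He. destruct (Hd0 1 ltac:(lra)) as [d [Hd Hq]].
    exists (Rmin d eps). split; [apply Rmin_pos; lra|]. intros t Ht.
    assert (Rmin d eps <= d) by apply Rmin_l. assert (Rmin d eps <= eps) by apply Rmin_r.
    specialize (Hq t ltac:(lra)).
    replace (psi t - a) with ((psi t - a) / t * t) by (field; lra).
    rewrite Rabs_mult, (Rabs_right t) by lra.
    apply Rlt_le_trans with (1 * t); [apply Rmult_lt_compat_r; lra|lra]. }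
  assert (Hle : forall r, 0 < r < Rs -> 0 < psi r <= a).
  { intros r Hr. split; [apply Hpos; lra|].
    destruct (Rle_dec (psi r) a) as [|Hc]; auto. exfalso.
    destruct (Hv (psi r - a) ltac:(lra)) as [d [Hd Hq]].
    set (s := Rmin d r / 2).
    assert (0 < Rmin d r) by (apply Rmin_pos; lra).
    assert (Rmin d r <= d) by apply Rmin_l. assert (Rmin d r <= r) by apply Rmin_r.
    specialize (Hq s ltac:(unfold s; lra)).
    assert (psi r < psi s) by (apply Hdec; unfold s; lra).
    apply Rabs_lt_between in Hq. lra. }
  split; [auto|]. split; [auto|].
  exists dpsi, ddpsi. split; [auto|].
  apply (g_vanish N ((m - 1) / m) Rs a psi dpsi ddpsi (fun r => rpow (psi r) (1 / (m - 1)))); auto.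
  - apply Rlt_le, Rdiv_lt_0_compat; lra.
  - intros r _; apply rpow_ge0.
Qed.

Lemma le_agree N m a psi1 R1 psi2 R2 : (3 <= N)%nat -> 1 < m -> 0 < a ->
  lane_emden_sol N m a psi1 R1 -> lane_emden_sol N m a psi2 R2 ->
  forall r, 0 <= r < Rmin R1 R2 -> psi1 r = psi2 r.
Proof.
  intros HN Hm Ha S1 S2.
  pose proof (le_basic _ _ _ _ _ HN Hm Ha S1) as [B1 [V1 [d1 [dd1 [O1 W1]]]]].
  pose proof (le_basic _ _ _ _ _ HN Hm Ha S2) as [B2 [V2 [d2 [dd2 [O2 W2]]]]].
  destruct S1 as [HR1 [E1 [_ [_ [_ [P1 [D1 _]]]]]]].
  destruct S2 as [HR2 [E2 [_ [_ [_ [P2 [D2 _]]]]]]].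
  intros r [Hr0 Hr].
  destruct (Req_dec r 0) as [->|Hr0']; [congruence|].
  assert (Hm1 : Rmin R1 R2 <= R1) by apply Rmin_l. assert (Hm2 : Rmin R1 R2 <= R2) by apply Rmin_r.
  set (b := (r + Rmin R1 R2) / 2).
  set (dl := Rmin (psi1 b) (psi2 b)).
  assert (Hb1 : 0 < psi1 b) by (apply P1; unfold b; lra).
  assert (Hb2 : 0 < psi2 b) by (apply P2; unfold b; lra).
  assert (Hdl : 0 < dl) by (unfold dl; apply Rmin_pos; lra).
  assert (Hdl1 : dl <= psi1 b) by apply Rmin_l. assert (Hdl2 : dl <= psi2 b) by apply Rmin_r.
  set (p := 1 / (m - 1)).
  assert (Hp : 0 < p) by (unfold p; apply Rdiv_lt_0_compat; lra).
  assert (Hrange1 : forall t, 0 < t < b -> dl <= psi1 t <= a).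
  { intros t Ht. split.
    - assert (psi1 b < psi1 t) by (apply D1; unfold b in *; lra). lra.
    - apply B1; unfold b in *; lra. }
  assert (Hrange2 : forall t, 0 < t < b -> dl <= psi2 t <= a).
  { intros t Ht. split.
    - assert (psi2 b < psi2 t) by (apply D2; unfold b in *; lra). lra.
    - apply B2; unfold b in *; lra. }
  apply (gronwall N ((m - 1) / m) (p * (Rpower dl (p - 1) + Rpower a (p - 1))) b a
           psi1 psi2 d1 d2 dd1 dd2 (fun t => rpow (psi1 t) p) (fun t => rpow (psi2 t) p)); auto.
  - apply Rlt_le, Rdiv_lt_0_compat; lra.
  - pose proof (Rpower_pos' dl (p - 1)). pose proof (Rpower_pos' a (p - 1)).
    apply Rmult_le_pos; lra.
  - intros t Ht. apply O1. unfold b in *; lra.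
  - intros t Ht. apply O2. unfold b in *; lra.
  - intros t Ht. specialize (Hrange1 t Ht). specialize (Hrange2 t Ht).
    rewrite !rpow_pos_eq by lra. apply Rpower_lip; auto.
  - intros t Ht. specialize (Hrange1 t Ht). specialize (Hrange2 t Ht).
    apply Rabs_le. lra.
  - eapply vanish_ext; [|apply (vanish_plus _ _ V1 (vanish_opp _ V2))]. intros t _. simpl. ring.
  - eapply vanish_ext; [|apply (vanish_plus _ _ W1 (vanish_opp _ W2))]. intros t _. simpl. ring.
  - unfold b; lra.
Qed.

Lemma le_not_lt N m a psi1 R1 psi2 R2 : (3 <= N)%nat -> 1 < m -> 0 < a ->
  lane_emden_sol N m a psi1 R1 -> lane_emden_sol N m a psi2 R2 -> ~ R1 < R2.
Proof.
  intros HN Hm Ha S1 S2 Hlt.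
  pose proof (le_agree _ _ _ _ _ _ _ HN Hm Ha S1 S2) as Ag.
  rewrite Rmin_left in Ag by lra.
  destruct S1 as [HR1 [E1 [_ [Z1 [C1 [P1 [D1 _]]]]]]].
  destruct S2 as [HR2 [E2 [_ [_ [_ [P2 [D2 _]]]]]]].
  assert (Hp : 0 < psi2 R1) by (apply P2; lra).
  destruct (C1 (psi2 R1) Hp) as [d [Hd Hc]].
  set (r := Rmax (R1 / 2) (R1 - d / 2)).
  assert (R1 / 2 <= r) by apply Rmax_l. assert (R1 - d / 2 <= r) by apply Rmax_r.
  assert (r < R1) by (unfold r; apply Rmax_lub_lt; lra).
  specialize (Hc r ltac:(lra)). rewrite Z1, Rminus_0_r in Hc.
  rewrite Ag in Hc by lra.
  assert (psi2 R1 < psi2 r) by (apply D2; lra).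
  assert (0 < psi2 r) by (apply P2; lra).
  rewrite Rabs_right in Hc by lra. lra.
Qed.

Lemma le_unique N m a psi1 R1 psi2 R2 : (3 <= N)%nat -> 1 < m -> 0 < a ->
  lane_emden_sol N m a psi1 R1 -> lane_emden_sol N m a psi2 R2 ->
  R1 = R2 /\ forall r, 0 <= r <= R1 -> psi1 r = psi2 r.
Proof.
  intros HN Hm Ha S1 S2.
  assert (R1 = R2).
  { destruct (Rtotal_order R1 R2) as [H|[H|H]]; auto; exfalso.
    - exact (le_not_lt _ _ _ _ _ _ _ HN Hm Ha S1 S2 H).
    - exact (le_not_lt _ _ _ _ _ _ _ HN Hm Ha S2 S1 H). }
  split; auto. subst R2.
  intros r Hr. destruct (Req_dec r R1) as [->|Hne].
  - destruct S1 as [_ [_ [_ [Z1 _]]]]. destruct S2 as [_ [_ [_ [Z2 _]]]]. congruence.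
  - apply (le_agree _ _ _ _ _ _ _ HN Hm Ha S1 S2). rewrite Rmin_left by lra. lra.
Qed.

Lemma deriv_scale (f : R -> R) a l x L : derivable_pt_lim f (l * x) L ->
  derivable_pt_lim (fun r => a * f (l * r)) x (a * l * L).
Proof.
  intros H.
  assert (H1 : derivable_pt_lim (fun r => l * r) x l).
  { pose proof (derivable_pt_lim_scal id l x 1 (derivable_pt_lim_id x)) as HH.
    rewrite Rmult_1_r in HH. exact HH. }
  pose proof (derivable_pt_lim_comp (fun r => l * r) f x l L H1 H) as H2.
  replace (a * l * L) with (a * (L * l)) by ring.
  apply (derivable_pt_lim_scal (comp f (fun r => l * r))). exact H2.
Qed.

Lemma rpow_scale a y p : 0 < a -> rpow (a * y) p = Rpower a p * rpow y p.
Proof.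
  intros Ha. destruct (Rlt_dec 0 y) as [Hy|Hy].
  - rewrite !rpow_pos_eq by (try apply Rmult_lt_0_compat; lra). rewrite Rpower_mult_distr; auto.
  - rewrite !rpow_nonpos; [ring|lra|]. assert (a * y <= 0) by (apply Rmult_le_0_l; lra). lra.
Qed.

Lemma le_scale N m phi R1 a : (3 <= N)%nat -> 1 < m -> 0 < a ->
  lane_emden_sol N m 1 phi R1 ->
  let l := Rpower a ((1 / (m - 1) - 1) / 2) in
  lane_emden_sol N m a (fun r => a * phi (l * r)) (R1 / l).
Proof.
  intros HN Hm Ha [HR1 [E0 [Hd0 [HZ [HC [HP [HD [dphi [ddphi Hode]]]]]]]]] l.
  assert (Hl : 0 < l) by apply Rpower_pos'.
  set (p := 1 / (m - 1)).
  assert (Hl2 : a * (l * l) = Rpower a p).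
  { unfold l. rewrite <- Rpower_plus. rewrite <- (Rpower_1 a) at 1 by auto.
    rewrite <- Rpower_plus. f_equal. unfold p. field. lra. }
  split; [apply Rdiv_lt_0_compat; auto|].
  split; [rewrite Rmult_0_r, E0; ring|].
  split.
  { intros eps He. destruct (Hd0 (eps / (a * l))) as [d [Hd Hq]].
    { apply Rdiv_lt_0_compat; auto. apply Rmult_lt_0_compat; auto. }
    exists (d / l). split; [apply Rdiv_lt_0_compat; auto|].
    intros r Hr. assert (0 < l * r < d).
    { split; [apply Rmult_lt_0_compat; lra|].
      apply (Rmult_lt_reg_r (/ l)); [apply Rinv_0_lt_compat; auto|].
      replace (l * r * / l) with r by (field; lra). unfold Rdiv in Hr; lra. }
    specialize (Hq (l * r) H).
    replace ((a * phi (l * r) - a) / r) with ((a * l) * ((phi (l * r) - 1) / (l * r))) by (field; lra).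
    rewrite Rabs_mult, (Rabs_right (a * l)) by (apply Rle_ge, Rlt_le, Rmult_lt_0_compat; auto).
    apply (Rmult_lt_compat_l (a * l)) in Hq; [|apply Rmult_lt_0_compat; auto].
    replace (a * l * (eps / (a * l))) with eps in Hq by (field; lra). auto. }
  assert (HlR : l * (R1 / l) = R1) by (field; lra).
  split; [rewrite HlR, HZ; ring|].
  split.
  { intros eps He. destruct (HC (eps / a)) as [d [Hd Hq]]; [apply Rdiv_lt_0_compat; auto|].
    exists (d / l). split; [apply Rdiv_lt_0_compat; auto|].
    intros r Hr. rewrite HlR, HZ, Rmult_0_r, Rminus_0_r.
    assert (R1 - d < l * r < R1).
    { split.
      - apply (Rmult_lt_reg_r (/ l)); [apply Rinv_0_lt_compat; auto|].
        replace (l * r * / l) with r by (field; lra).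
        replace ((R1 - d) * / l) with (R1 / l - d / l) by (field; lra). lra.
      - apply (Rmult_lt_reg_r (/ l)); [apply Rinv_0_lt_compat; auto|].
        replace (l * r * / l) with r by (field; lra). unfold Rdiv in Hr; lra. }
    specialize (Hq (l * r) H). rewrite HZ, Rminus_0_r in Hq.
    rewrite Rabs_mult, (Rabs_right a) by lra.
    apply (Rmult_lt_compat_l a) in Hq; auto. replace (a * (eps / a)) with eps in Hq by (field; lra). auto. }
  assert (Hin : forall r, 0 <= r < R1 / l -> 0 <= l * r < R1).
  { intros r Hr. split; [apply Rmult_le_pos; lra|].
    apply (Rmult_lt_reg_r (/ l)); [apply Rinv_0_lt_compat; auto|].
    replace (l * r * / l) with r by (field; lra). unfold Rdiv in Hr; lra. }
  split.
  { intros r Hr. apply Rmult_lt_0_compat; [auto|]. apply HP, Hin; auto. }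
  split.
  { intros r1 r2 H1 H2 H3. apply Rmult_lt_compat_l; auto.
    apply HD. apply Rmult_lt_0_compat; auto. apply Rmult_lt_compat_l; auto.
    apply Hin; lra. }
  exists (fun r => a * l * dphi (l * r)), (fun r => a * l * l * ddphi (l * r)).
  intros r Hr.
  assert (Hr' : 0 < l * r < R1).
  { split; [apply Rmult_lt_0_compat; lra|]. apply Hin; lra. }
  destruct (Hode (l * r) Hr') as [A [B C]].
  split; [apply deriv_scale; auto|].
  split; [apply (deriv_scale dphi (a * l) l); auto|].
  rewrite rpow_scale by auto. fold p. fold p in C.
  rewrite <- Hl2.
  replace (a * l * l * ddphi (l * r) + (INR N - 1) / r * (a * l * dphi (l * r))) with
    (a * (l * l) * (ddphi (l * r) + (INR N - 1) / (l * r) * dphi (l * r))) by (field; lra).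
  rewrite C. ring.
Qed.

Lemma scal_R_eq : forall x y : R, scal x y = x * y. Proof. reflexivity. Qed.

Lemma mass_scale N m phi R1 a (pr1 : Riemann_integrable (mass_integrand N m phi) 0 R1) :
  (3 <= N)%nat -> 0 < a ->
  let l := Rpower a ((1 / (m - 1) - 1) / 2) in
  exists pr : Riemann_integrable (mass_integrand N m (fun r => a * phi (l * r))) 0 (R1 / l),
    RiemannInt pr = Rpower a (1 / (m - 1)) / l ^ N * RiemannInt pr1.
Proof.
  intros HN Ha l.
  assert (Hl : 0 < l) by apply Rpower_pos'.
  set (f := mass_integrand N m phi).
  set (K := Rpower a (1 / (m - 1)) / l ^ N).
  assert (Hf : ex_RInt f (l * 0 + 0) (l * (R1 / l) + 0)).
  { replace (l * 0 + 0) with 0 by ring. replace (l * (R1 / l) + 0) with R1 by (field; lra).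
    apply ex_RInt_Reals_1; exact pr1. }
  assert (Eg : forall y, mass_integrand N m (fun r => a * phi (l * r)) y =
                 scal K (scal l (f (l * y + 0)))).
  { intros y. transitivity (K * (l * f (l * y + 0))); [|reflexivity].
    unfold f, mass_integrand, K. rewrite Rplus_0_r. rewrite rpow_scale by auto.
    assert (exists k, N = S k) as [k ->] by (exists (N - 1)%nat; lia).
    replace (S k - 1)%nat with k by lia. rewrite Rpow_mult_distr. simpl pow.
    field. split; [apply pow_nonzero|]; lra. }
  assert (Hg : ex_RInt (mass_integrand N m (fun r => a * phi (l * r))) 0 (R1 / l)).
  { apply (ex_RInt_ext (fun y => scal K (scal l (f (l * y + 0))))).
    - intros x _; symmetry; apply Eg.
    - apply (ex_RInt_scal (fun y => scal l (f (l * y + 0)))). apply (ex_RInt_comp_lin f l 0 0 (R1 / l) Hf). }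
  exists (ex_RInt_Reals_0 _ _ _ Hg).
  rewrite <- RInt_Reals.
  rewrite (RInt_ext _ (fun y => scal K (scal l (f (l * y + 0))))) by (intros; apply Eg).
  rewrite (RInt_scal (fun y => scal l (f (l * y + 0)))) by (apply (ex_RInt_comp_lin f l 0 0 (R1 / l) Hf)).
  rewrite scal_R_eq. f_equal.
  etransitivity; [apply (RInt_comp_lin f l 0 0 (R1 / l) Hf)|].
  replace (l * 0 + 0) with 0 by ring. replace (l * (R1 / l) + 0) with R1 by (field; lra).
  apply RInt_Reals.
Qed.

Ltac Req := match goal with |- ?a = ?b => change (@eq R a b) end.

Definition cont (f : R -> R) := forall t, continuous f t.

Lemma cont_ex_RInt f a b : cont f -> ex_RInt f a b.
Proof. intros H. apply (ex_RInt_continuous (V := R_CompleteNormedModule)). intros; apply H. Qed.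

Lemma RInt_minus_R f g a b : ex_RInt f a b -> ex_RInt g a b ->
  RInt (fun x => f x - g x) a b = RInt f a b - RInt g a b.
Proof. intros. apply (RInt_minus f g a b); auto. Qed.

Lemma RInt_scal_R f k a b : ex_RInt f a b -> RInt (fun x => k * f x) a b = k * RInt f a b.
Proof. intros. apply (RInt_scal f a b k); auto. Qed.

Lemma cont_mult f g : cont f -> cont g -> cont (fun x => f x * g x).
Proof. intros Hf Hg t. apply (continuous_mult f g); auto. Qed.

Lemma cont_minus f g : cont f -> cont g -> cont (fun x => f x - g x).
Proof. intros Hf Hg t. apply (continuous_minus f g); auto. Qed.

Lemma cont_const k : cont (fun _ => k).
Proof. intros t. apply continuous_const. Qed.

Lemma cont_id : cont (fun x => x).
Proof. intros t. apply continuous_id. Qed.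

Lemma cont_pow k : cont (fun x => x ^ k).
Proof. intros t. apply (ex_derive_continuous (K := R_AbsRing) (V := R_NormedModule) (fun x => x ^ k)). auto_derive. auto. Qed.

Lemma cont_comp f g : cont f -> cont g -> cont (fun x => g (f x)).
Proof. intros Hf Hg t. apply (continuous_comp f g); auto. Qed.

Lemma RInt_pow k r : RInt (fun t => t ^ k) 0 r = r ^ S k / INR (S k).
Proof.
  assert (HS : INR (S k) <> 0) by (apply not_0_INR; lia).
  apply is_RInt_unique.
  replace (r ^ S k / INR (S k)) with (minus (r ^ S k / INR (S k)) (0 ^ S k / INR (S k))).
  2:{ simpl. rewrite Rmult_0_l. unfold minus, plus, opp; simpl. field. auto. }
  apply (is_RInt_derive (fun t => t ^ S k / INR (S k))).
  - intros y _. auto_derive; auto. change (match k with 0%nat => 1 | S _ => INR k + 1 end) with (INR (S k)). field. auto.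
  - intros x _. apply cont_pow.
Qed.


Definition I2 (N : nat) (g : R -> R) (r : R) := RInt (fun t => t ^ (N - 1) * g t) 0 r.
Definition Jop (N : nat) (g : R -> R) (r : R) :=
  if Rlt_dec 0 r then RInt (fun t => t * g t) 0 r - I2 N g r / r ^ (N - 2) else 0.

Lemma Jop_nonpos N g r : r <= 0 -> Jop N g r = 0.
Proof. intros H. unfold Jop. destruct (Rlt_dec 0 r); [lra|auto]. Qed.

Lemma Jop_kernel N g r : cont g -> 0 < r ->
  Jop N g r = RInt (fun t => (t - t ^ (N - 1) / r ^ (N - 2)) * g t) 0 r.
Proof.
  intros Hg Hr. unfold Jop. destruct (Rlt_dec 0 r); [|lra].
  assert (Hn : r ^ (N - 2) <> 0) by (apply pow_nonzero; lra).
  transitivity (RInt (fun t => t * g t - / r ^ (N - 2) * (t ^ (N - 1) * g t)) 0 r).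
  2:{ apply RInt_ext. intros x _. Req. field. auto. }
  rewrite RInt_minus_R.
  - rewrite RInt_scal_R. unfold I2. field. auto.
    apply cont_ex_RInt, cont_mult; [apply cont_pow|auto].
  - apply cont_ex_RInt, cont_mult; [apply cont_id|auto].
  - apply cont_ex_RInt. intros t. apply (cont_mult (fun _ => / r ^ (N - 2))); [apply cont_const|].
    apply cont_mult; [apply cont_pow|auto].
Qed.

Lemma kern_bounds N r t : (3 <= N)%nat -> 0 < r -> 0 <= t <= r ->
  0 <= t - t ^ (N - 1) / r ^ (N - 2) <= t.
Proof.
  intros HN Hr Ht.
  assert (E : t ^ (N - 1) / r ^ (N - 2) = t * (t / r) ^ (N - 2)).
  { replace (N - 1)%nat with (S (N - 2)) by lia. unfold Rdiv. rewrite Rpow_mult_distr.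
    rewrite pow_inv. simpl. field. apply pow_nonzero. lra. }
  rewrite E.
  assert (0 <= t / r <= 1).
  { split; [apply Rdiv_le_0_compat; lra|]. apply (Rmult_le_reg_r r); auto.
    unfold Rdiv; rewrite Rmult_assoc, Rinv_l; lra. }
  assert (0 <= (t / r) ^ (N - 2)) by (apply pow_le; lra).
  assert ((t / r) ^ (N - 2) <= 1) by (rewrite <- (pow1 (N - 2)); apply pow_incr; lra).
  split.
  - assert (t * (t / r) ^ (N - 2) <= t * 1) by (apply Rmult_le_compat_l; lra). lra.
  - assert (0 <= t * (t / r) ^ (N - 2)) by (apply Rmult_le_pos; lra). lra.
Qed.

Lemma Jop_minus N g h r : cont g -> cont h -> 0 < r ->
  Jop N g r - Jop N h r = RInt (fun t => (t - t ^ (N - 1) / r ^ (N - 2)) * (g t - h t)) 0 r.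
Proof.
  intros Hg Hh Hr. rewrite !Jop_kernel by auto.
  rewrite <- RInt_minus_R.
  - apply RInt_ext. intros; Req; ring.
  - apply cont_ex_RInt, cont_mult; auto. apply cont_minus; [apply cont_id|].
    apply (cont_mult (fun x => x ^ (N - 1))); [apply cont_pow|apply cont_const].
  - apply cont_ex_RInt, cont_mult; auto. apply cont_minus; [apply cont_id|].
    apply (cont_mult (fun x => x ^ (N - 1))); [apply cont_pow|apply cont_const].
Qed.

Lemma Jop_diff N g h r B k : (3 <= N)%nat -> cont g -> cont h -> 0 < r -> 0 <= B ->
  (forall t, 0 <= t <= r -> Rabs (g t - h t) <= B * t ^ k) ->
  Rabs (Jop N g r - Jop N h r) <= B * r ^ (S (S k)) / INR (S (S k)).
Proof.
  intros HN Hg Hh Hr HB Hb.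
  rewrite Jop_minus by auto.
  assert (Hc : cont (fun t => (t - t ^ (N - 1) / r ^ (N - 2)) * (g t - h t))).
  { apply cont_mult; [|apply cont_minus; auto]. apply cont_minus; [apply cont_id|].
    apply (cont_mult (fun x => x ^ (N - 1))); [apply cont_pow|apply cont_const]. }
  eapply Rle_trans; [apply abs_RInt_le; [lra|apply cont_ex_RInt; auto]|].
  apply Rle_trans with (RInt (fun t => B * t ^ (S k)) 0 r).
  - apply RInt_le; [lra| | |].
    + apply cont_ex_RInt. intros t. apply (continuous_comp _ Rabs); [apply Hc|].
      apply continuous_Rabs.
    + apply cont_ex_RInt, cont_mult; [apply cont_const|apply cont_pow].
    + intros t Ht. pose proof (kern_bounds N r t HN Hr ltac:(lra)).
      rewrite Rabs_mult, Rabs_right by lra.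
      specialize (Hb t ltac:(lra)).
      apply Rle_trans with (t * (B * t ^ k)).
      * apply Rmult_le_compat; try lra; apply Rabs_pos.
      * simpl. lra.
  - rewrite RInt_scal_R by (apply cont_ex_RInt, cont_pow). rewrite RInt_pow. unfold Rdiv. lra.
Qed.

Lemma Jop_mono N g h r : (3 <= N)%nat -> cont g -> cont h -> 0 < r ->
  (forall t, 0 < t < r -> g t <= h t) -> Jop N g r <= Jop N h r.
Proof.
  intros HN Hg Hh Hr Hle.
  assert (0 <= Jop N h r - Jop N g r); [|lra].
  rewrite Jop_minus by auto. apply RInt_ge_0; [lra| |].
  - apply cont_ex_RInt, cont_mult; [|apply cont_minus; auto]. apply cont_minus; [apply cont_id|].
    apply (cont_mult (fun x => x ^ (N - 1))); [apply cont_pow|apply cont_const].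
  - intros t Ht. pose proof (kern_bounds N r t HN Hr ltac:(lra)). specialize (Hle t Ht).
    apply Rmult_le_pos; lra.
Qed.

Lemma Jop_one N r : (3 <= N)%nat -> 0 < r -> Jop N (fun _ => 1) r = r ^ 2 * (INR N - 2) / (2 * INR N).
Proof.
  intros HN Hr. unfold Jop, I2. destruct (Rlt_dec 0 r); [|lra].
  rewrite (RInt_ext (fun t => t * 1) (fun t => t ^ 1)) by (intros; Req; simpl; ring).
  rewrite (RInt_ext (fun t => t ^ (N - 1) * 1) (fun t => t ^ (N - 1))) by (intros; Req; ring).
  rewrite !RInt_pow. replace (S (N - 1)) with N by lia.
  assert (E : r ^ N = r ^ 2 * r ^ (N - 2)) by (rewrite <- pow_add; f_equal; lia). rewrite E.
  assert (r ^ (N - 2) <> 0) by (apply pow_nonzero; lra).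
  assert (INR N <> 0) by (apply not_0_INR; lia).
  replace (INR (S 1)) with 2 by (simpl; ring).
  field. auto.
Qed.

Lemma dpl_eq f x l l' : derivable_pt_lim f x l -> l = l' -> derivable_pt_lim f x l'.
Proof. intros H ->; auto. Qed.

Lemma dpl_ext_loc f g x l d : 0 < d -> (forall y, Rabs (y - x) < d -> f y = g y) ->
  derivable_pt_lim f x l -> derivable_pt_lim g x l.
Proof.
  intros Hd He Hf. apply is_derive_Reals. apply is_derive_Reals in Hf.
  apply (is_derive_ext_loc f g); auto.
  exists (mkposreal d Hd). intros y Hy. apply He. apply Hy.
Qed.

Lemma dpl_RInt f x : cont f -> derivable_pt_lim (fun r => RInt f 0 r) x (f x).
Proof.
  intros Hf. apply is_derive_Reals.
  apply (is_derive_RInt f (fun r => RInt f 0 r) 0 x).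
  - exists (mkposreal 1 Rlt_0_1). intros y _. apply (RInt_correct (V := R_CompleteNormedModule)).
    apply cont_ex_RInt; auto.
  - apply Hf.
Qed.

Lemma cont_eps f x : (forall eps, 0 < eps -> exists d, 0 < d /\ forall y, Rabs (y - x) < d -> Rabs (f y - f x) < eps) ->
  continuous f x.
Proof.
  intros H. apply continuity_pt_filterlim. intros eps He.
  destruct (H eps He) as [d [Hd Hy]]. exists d. split; auto.
  intros y [_ Hy']. apply Hy. apply Hy'.
Qed.

Lemma dpl_cont f x l : derivable_pt_lim f x l -> continuous f x.
Proof.
  intros H. apply (ex_derive_continuous (K := R_AbsRing) (V := R_NormedModule)).
  exists l. apply is_derive_Reals. auto.
Qed.

Lemma Jop_zero N r : Jop N (fun _ => 0) r = 0.
Proof.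
  destruct (Rlt_dec 0 r) as [Hr|Hr]; [|apply Jop_nonpos; lra].
  rewrite Jop_kernel by (auto; apply cont_const).
  rewrite (RInt_ext _ (fun _ => 0)) by (intros; Req; ring).
  rewrite RInt_const. unfold scal; simpl; unfold mult; simpl. ring.
Qed.

Lemma Jop_deriv N g r : (3 <= N)%nat -> cont g -> 0 < r ->
  derivable_pt_lim (Jop N g) r ((INR N - 2) * I2 N g r / r ^ (N - 1)).
Proof.
  intros HN Hg Hr.
  assert (exists k, N = S (S (S k))) as [k ->] by (exists (N-3)%nat; lia).
  replace (S (S (S k)) - 1)%nat with (S (S k)) by lia.
  replace (S (S (S k)) - 2)%nat with (S k) by lia.
  apply (dpl_ext_loc (fun t => RInt (fun s => s * g s) 0 t - I2 (S (S (S k))) g t / t ^ (S k)) _ r _ r); auto.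
  { intros y Hy. apply Rabs_lt_between in Hy. unfold Jop.
    destruct (Rlt_dec 0 y); [|lra]. replace (S (S (S k)) - 2)%nat with (S k) by lia. auto. }
  unfold I2. replace (S (S (S k)) - 1)%nat with (S (S k)) by lia.
  apply dpl_eq with (r * g r - ((r ^ S (S k) * g r) * r ^ S k - (INR (S k) * r ^ pred (S k)) * RInt (fun s => s ^ S (S k) * g s) 0 r) / (r ^ S k)²).
  - apply derivable_pt_lim_minus.
    + apply (dpl_RInt (fun s => s * g s)). apply cont_mult; [apply cont_id|auto].
    + apply (derivable_pt_lim_div (fun t => RInt (fun s => s ^ S (S k) * g s) 0 t) (fun t => t ^ S k)).
      * apply (dpl_RInt (fun s => s ^ S (S k) * g s)). apply cont_mult; [apply cont_pow|auto].
      * apply derivable_pt_lim_pow.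
      * apply pow_nonzero; lra.
  - simpl pred. unfold Rsqr. rewrite !S_INR. simpl. field. split; [apply pow_nonzero|]; lra.
Qed.

Lemma I2_ratio_deriv N g r : (3 <= N)%nat -> cont g -> 0 < r ->
  derivable_pt_lim (fun t => I2 N g t / t ^ (N - 1)) r (g r - (INR N - 1) * I2 N g r / r ^ N).
Proof.
  intros HN Hg Hr.
  assert (exists k, N = S (S (S k))) as [k ->] by (exists (N-3)%nat; lia).
  replace (S (S (S k)) - 1)%nat with (S (S k)) by lia. unfold I2.
  replace (S (S (S k)) - 1)%nat with (S (S k)) by lia.
  apply dpl_eq with (((r ^ S (S k) * g r) * r ^ S (S k) - (INR (S (S k)) * r ^ pred (S (S k))) * RInt (fun s => s ^ S (S k) * g s) 0 r) / (r ^ S (S k))²).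
  - apply (derivable_pt_lim_div (fun t => RInt (fun s => s ^ S (S k) * g s) 0 t) (fun t => t ^ S (S k))).
    + apply (dpl_RInt (fun s => s ^ S (S k) * g s)). apply cont_mult; [apply cont_pow|auto].
    + apply derivable_pt_lim_pow.
    + apply pow_nonzero; lra.
  - simpl pred. unfold Rsqr. rewrite !S_INR. simpl. field. split; [apply pow_nonzero|]; lra.
Qed.

Lemma Jop_cont N g : (3 <= N)%nat -> cont g -> (forall t, Rabs (g t) <= 1) -> cont (Jop N g).
Proof.
  intros HN Hg Hb x.
  destruct (Rtotal_order x 0) as [Hx|[Hx|Hx]].
  - apply cont_eps. intros eps He. exists (- x). split; [lra|].
    intros y Hy. apply Rabs_lt_between in Hy.
    rewrite !Jop_nonpos by lra. rewrite Rminus_0_r, Rabs_R0. auto.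
  - subst x. apply cont_eps. intros eps He. exists (Rmin 1 eps). split; [apply Rmin_pos; lra|].
    intros y Hy. assert (Rmin 1 eps <= 1) by apply Rmin_l. assert (Rmin 1 eps <= eps) by apply Rmin_r.
    rewrite (Jop_nonpos N g 0) by lra. repeat rewrite Rminus_0_r in *.
    destruct (Rle_dec y 0) as [Hy0|Hy0].
    + rewrite Jop_nonpos by lra. rewrite Rabs_R0; auto.
    + pose proof (Jop_diff N g (fun _ => 0) y 1 0 HN Hg (cont_const 0) ltac:(lra) ltac:(lra)) as HH.
      rewrite Jop_zero, Rminus_0_r in HH.
      assert (Hy1 : 0 < y < Rmin 1 eps) by (apply Rabs_lt_between in Hy; lra).
      eapply Rle_lt_trans; [apply HH|].
      * intros t _. rewrite Rminus_0_r. simpl. rewrite Rmult_1_r. auto.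
      * simpl. replace (1 * (y * (y * 1)) / (1 + 1)) with (y * y / 2) by field.
        assert (y * y <= y * 1) by (apply Rmult_le_compat_l; lra). lra.
  - apply (dpl_cont _ _ _ (Jop_deriv N g x HN Hg Hx)).
Qed.

Definition clamp (dl u : R) := Rmax dl (Rmin u 1).
Definition Fcl (p dl u : R) := Rpower (clamp dl u) p.

Lemma clamp_range dl u : 0 < dl < 1 -> dl <= clamp dl u <= 1.
Proof.
  intros H. unfold clamp, Rmax, Rmin.
  destruct (Rle_dec u 1); destruct (Rle_dec dl _); lra.
Qed.

Lemma clamp_id dl u : dl <= u <= 1 -> clamp dl u = u.
Proof. intros H. unfold clamp, Rmax, Rmin. destruct (Rle_dec u 1); destruct (Rle_dec dl _); lra. Qed.

Lemma clamp_lip dl u v : 0 < dl < 1 -> Rabs (clamp dl u - clamp dl v) <= Rabs (u - v).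
Proof.
  intros H. unfold clamp, Rmax, Rmin.
  destruct (Rle_dec u 1); destruct (Rle_dec v 1);
  repeat match goal with |- context [Rle_dec ?a ?b] => destruct (Rle_dec a b) end;
  destruct (Rle_dec u v);
  try (rewrite (Rabs_left1 (u - v)) by lra); try (rewrite (Rabs_right (u - v)) by lra);
  try (apply Rabs_le); lra.
Qed.

Lemma clamp_mono dl u v : u <= v -> clamp dl u <= clamp dl v.
Proof.
  intros H. unfold clamp, Rmax, Rmin.
  destruct (Rle_dec u 1); destruct (Rle_dec v 1);
  repeat match goal with |- context [Rle_dec ?a ?b] => destruct (Rle_dec a b) end; lra.
Qed.

Lemma Rpower_one_base p : Rpower 1 p = 1.
Proof. unfold Rpower. rewrite ln_1, Rmult_0_r. apply exp_0. Qed.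

Definition Lip (p dl : R) := p * (Rpower dl (p - 1) + Rpower 1 (p - 1)).

Lemma Fcl_lip p dl u v : 0 < p -> 0 < dl < 1 ->
  Rabs (Fcl p dl u - Fcl p dl v) <= Lip p dl * Rabs (u - v).
Proof.
  intros Hp Hdl. unfold Fcl, Lip.
  pose proof (clamp_range dl u Hdl). pose proof (clamp_range dl v Hdl).
  eapply Rle_trans; [apply (Rpower_lip p dl 1); lra|].
  apply Rmult_le_compat_l; [|apply clamp_lip; auto].
  pose proof (Rpower_pos' dl (p - 1)). pose proof (Rpower_pos' 1 (p - 1)).
  apply Rmult_le_pos; lra.
Qed.

Lemma Lip_pos p dl : 0 < p -> 0 <= Lip p dl.
Proof.
  intros Hp. unfold Lip. pose proof (Rpower_pos' dl (p - 1)). pose proof (Rpower_pos' 1 (p - 1)).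
  apply Rmult_le_pos; lra.
Qed.

Lemma Fcl_bounds p dl u : 0 < p -> 0 < dl < 1 -> Rpower dl p <= Fcl p dl u <= 1.
Proof.
  intros Hp Hdl. unfold Fcl. pose proof (clamp_range dl u Hdl). split.
  - apply Rle_Rpower_l; lra.
  - rewrite <- (Rpower_one_base p). apply Rle_Rpower_l; lra.
Qed.

Lemma Fcl_mono p dl u v : 0 < p -> 0 < dl < 1 -> u <= v -> Fcl p dl u <= Fcl p dl v.
Proof.
  intros Hp Hdl H. unfold Fcl. pose proof (clamp_range dl u Hdl).
  apply Rle_Rpower_l; [lra|]. split; [lra|]. apply clamp_mono; auto.
Qed.

Lemma Fcl_id p dl u : dl <= u <= 1 -> Fcl p dl u = Rpower u p.
Proof. intros H. unfold Fcl. rewrite clamp_id; auto. Qed.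

Lemma Fcl_cont p dl : 0 < p -> 0 < dl < 1 -> cont (Fcl p dl).
Proof.
  intros Hp Hdl x. apply cont_eps. intros eps He.
  pose proof (Lip_pos p dl Hp).
  exists (eps / (Lip p dl + 1)). split; [apply Rdiv_lt_0_compat; lra|].
  intros y Hy. eapply Rle_lt_trans; [apply Fcl_lip; auto|].
  apply Rle_lt_trans with ((Lip p dl + 1) * Rabs (y - x)).
  { apply Rmult_le_compat_r; [apply Rabs_pos|lra]. }
  apply Rlt_le_trans with ((Lip p dl + 1) * (eps / (Lip p dl + 1))).
  { apply Rmult_lt_compat_l; lra. }
  right; field; lra.
Qed.

Definition Top (N : nat) (p c dl : R) (phi : R -> R) (r : R) :=
  1 - c / (INR N - 2) * Jop N (fun t => Fcl p dl (phi t)) r.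

Fixpoint pic (N : nat) (p c dl : R) (n : nat) : R -> R :=
  match n with
  | O => fun _ => 1
  | S n => Top N p c dl (pic N p c dl n)
  end.

Lemma Top_cont N p c dl phi : (3 <= N)%nat -> 0 < p -> 0 < dl < 1 -> cont phi -> cont (Top N p c dl phi).
Proof.
  intros HN Hp Hdl Hphi. unfold Top.
  apply cont_minus; [apply cont_const|]. apply (cont_mult (fun _ => c / (INR N - 2))); [apply cont_const|].
  apply Jop_cont; auto.
  - apply cont_comp; auto. apply Fcl_cont; auto.
  - intros t. pose proof (Fcl_bounds p dl (phi t) Hp Hdl). pose proof (Rpower_pos' dl p).
    rewrite Rabs_right by lra. lra.
Qed.

Lemma pic_cont N p c dl n : (3 <= N)%nat -> 0 < p -> 0 < dl < 1 -> cont (pic N p c dl n).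
Proof.
  intros HN Hp Hdl. induction n; simpl.
  - apply cont_const.
  - apply Top_cont; auto.
Qed.

Lemma term_le_exp y n : 0 <= y -> y ^ n / INR (fact n) <= exp y.
Proof.
  intros Hy. eapply Rle_trans; [|apply (exp_ge_taylor y n Hy)].
  assert (Hpos : forall k, 0 <= y ^ k / INR (fact k)).
  { intros k. apply Rdiv_le_0_compat; [apply pow_le; auto|apply lt_0_INR, lt_O_fact]. }
  destruct n; [simpl; lra|]. rewrite tech5.
  assert (forall m, 0 <= sum_f_R0 (fun k => y ^ k / INR (fact k)) m).
  { induction m; [simpl; apply (Hpos 0%nat)|]. rewrite tech5. specialize (Hpos (S m)). lra. }
  specialize (H n). lra.
Qed.

Lemma pic_diff N p c dl n r : (3 <= N)%nat -> 0 < p -> 0 < dl < 1 -> 0 < c -> 0 <= r ->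
  Rabs (pic N p c dl (S n) r - pic N p c dl n r) <=
  (c / (INR N - 2) / 2) * (c / (INR N - 2) * Lip p dl) ^ n / INR (fact n) * r ^ (2 * n + 2).
Proof.
  intros HN Hp Hdl Hc Hr.
  assert (HN2 : 0 < INR N - 2) by (assert (3 <= INR N) by (replace 3 with (INR 3) by (simpl; ring); apply le_INR; auto); lra).
  set (a := c / (INR N - 2)).
  assert (Ha : 0 < a) by (unfold a; apply Rdiv_lt_0_compat; auto).
  pose proof (Lip_pos p dl Hp) as HL.
  revert r Hr. induction n as [|n IH]; intros r Hr.
  - simpl pic. unfold Top. destruct (Req_dec r 0) as [->|Hr0].
    + rewrite Jop_nonpos by lra. rewrite Rmult_0_r. replace (1 - 0 - 1) with 0 by ring. rewrite Rabs_R0. simpl. rewrite !Rmult_0_l. lra.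
    + pose proof (Jop_diff N (fun t => Fcl p dl 1) (fun _ => 0) r 1 0 HN (cont_const _) (cont_const 0) ltac:(lra) ltac:(lra)) as HH.
      rewrite Jop_zero, !Rminus_0_r in HH.
      assert (HH' : Rabs (Jop N (fun t => Fcl p dl 1) r) <= r ^ 2 / 2).
      { eapply Rle_trans; [apply HH|].
        - intros t _. simpl. rewrite Rmult_1_r.
          pose proof (Fcl_bounds p dl 1 Hp Hdl). pose proof (Rpower_pos' dl p).
          rewrite Rabs_right; lra.
        - simpl. lra. }
      replace (1 - c / (INR N - 2) * Jop N (fun t => Fcl p dl 1) r - 1) with
        (- (a * Jop N (fun t => Fcl p dl 1) r)) by (unfold a; ring).
      rewrite Rabs_Ropp, Rabs_mult, (Rabs_right a) by lra.
      replace (a / 2 * (a * Lip p dl) ^ 0 / INR (fact 0) * r ^ (2 * 0 + 2)) with (a * (r ^ 2 / 2)) by (simpl; field).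
      apply Rmult_le_compat_l; lra.
  - set (D := a / 2 * (a * Lip p dl) ^ n / INR (fact n)).
    assert (HD : 0 <= D).
    { unfold D. apply Rdiv_le_0_compat; [|apply lt_0_INR, lt_O_fact].
      apply Rmult_le_pos; [lra|]. apply pow_le. apply Rmult_le_pos; lra. }
    change (pic N p c dl (S (S n)) r) with (Top N p c dl (pic N p c dl (S n)) r).
    change (pic N p c dl (S n) r) with (Top N p c dl (pic N p c dl n) r) at 1.
    unfold Top.
    destruct (Req_dec r 0) as [->|Hr0].
    { rewrite !Jop_nonpos by lra. rewrite !Rmult_0_r, Rminus_diag, Rabs_R0.
      apply Rmult_le_pos; [|apply pow_le; lra].
      apply Rdiv_le_0_compat; [|apply lt_0_INR, lt_O_fact].
      apply Rmult_le_pos; [lra|]. apply pow_le. apply Rmult_le_pos; lra. }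
    assert (Hj := Jop_diff N (fun t => Fcl p dl (pic N p c dl (S n) t)) (fun t => Fcl p dl (pic N p c dl n t))
                    r (Lip p dl * D) (2 * n + 2) HN).
    assert (Hc1 : forall k, cont (fun t => Fcl p dl (pic N p c dl k t))).
    { intros k. apply cont_comp; [apply pic_cont; auto|apply Fcl_cont; auto]. }
    specialize (Hj (Hc1 _) (Hc1 _) ltac:(lra) ltac:(apply Rmult_le_pos; lra)).
    assert (Hj' : Rabs (Jop N (fun t => Fcl p dl (pic N p c dl (S n) t)) r - Jop N (fun t => Fcl p dl (pic N p c dl n t)) r)
                   <= Lip p dl * D * r ^ S (S (2 * n + 2)) / INR (S (S (2 * n + 2)))).
    { apply Hj. intros t Ht. eapply Rle_trans; [apply Fcl_lip; auto|].
      rewrite Rmult_assoc. apply Rmult_le_compat_l; auto. apply IH. lra. }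
    replace (1 - c / (INR N - 2) * Jop N (fun t => Fcl p dl (pic N p c dl (S n) t)) r -
       (1 - c / (INR N - 2) * Jop N (fun t => Fcl p dl (pic N p c dl n t)) r)) with
      (- (a * (Jop N (fun t => Fcl p dl (pic N p c dl (S n) t)) r - Jop N (fun t => Fcl p dl (pic N p c dl n t)) r)))
      by (unfold a; ring).
    rewrite Rabs_Ropp, Rabs_mult, (Rabs_right a) by lra.
    eapply Rle_trans; [apply Rmult_le_compat_l; [lra|apply Hj']|].
    replace (a / 2 * (a * Lip p dl) ^ S n / INR (fact (S n)) * r ^ (2 * S n + 2)) with
      (a * Lip p dl * D * r ^ S (S (2 * n + 2)) / INR (S n)).
    + assert (0 <= a * Lip p dl * D * r ^ S (S (2 * n + 2))).
      { apply Rmult_le_pos; [|apply pow_le; lra]. apply Rmult_le_pos; auto. apply Rmult_le_pos; lra. }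
      unfold Rdiv. rewrite <- !Rmult_assoc. apply Rmult_le_compat_l; [rewrite !Rmult_assoc in *; auto|].
      apply Rinv_le_contravar; [apply lt_0_INR; lia|]. apply le_INR; lia.
    + unfold D. replace (2 * S n + 2)%nat with (S (S (2 * n + 2))) by lia.
      rewrite fact_simpl, mult_INR. simpl pow.
      assert (INR (fact n) <> 0) by (apply not_0_INR, fact_neq_0).
      assert (INR (S n) <> 0) by (apply not_0_INR; lia).
      field. auto.
Qed.

Definition Ebd N p c dl r :=
  (c / (INR N - 2) / 2) * r ^ 2 * exp (2 * (c / (INR N - 2) * Lip p dl) * r ^ 2).

Lemma pic_neg N p c dl n r : r <= 0 -> pic N p c dl n r = 1.
Proof. intros Hr. destruct n; simpl; auto. unfold Top. rewrite Jop_nonpos by lra. ring. Qed.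

Lemma INRN2 N : (3 <= N)%nat -> 0 < INR N - 2.
Proof. intros HN. assert (3 <= INR N) by (replace 3 with (INR 3) by (simpl; ring); apply le_INR; auto). lra. Qed.

Lemma Ebd_nonneg N p c dl r : (3 <= N)%nat -> 0 < p -> 0 < c -> 0 <= Ebd N p c dl r.
Proof.
  intros HN Hp Hc. unfold Ebd. pose proof (INRN2 N HN). pose proof (exp_pos (2 * (c / (INR N - 2) * Lip p dl) * r ^ 2)).
  apply Rmult_le_pos; [|lra]. apply Rmult_le_pos; [|apply pow2_ge_0].
  apply Rlt_le. apply Rdiv_lt_0_compat; [apply Rdiv_lt_0_compat|]; lra.
Qed.

Lemma Ebd_mono N p c dl t r : (3 <= N)%nat -> 0 < p -> 0 < c -> Rabs t <= Rabs r ->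
  Ebd N p c dl t <= Ebd N p c dl r.
Proof.
  intros HN Hp Hc Ht. unfold Ebd. pose proof (INRN2 N HN).
  assert (Ht2 : t ^ 2 <= r ^ 2).
  { rewrite <- !Rsqr_pow2. apply Rsqr_le_abs_1. auto. }
  assert (Ha : 0 < c / (INR N - 2)) by (apply Rdiv_lt_0_compat; lra).
  pose proof (Lip_pos p dl Hp).
  assert (HE : exp (2 * (c / (INR N - 2) * Lip p dl) * t ^ 2) <= exp (2 * (c / (INR N - 2) * Lip p dl) * r ^ 2)).
  { assert (2 * (c / (INR N - 2) * Lip p dl) * t ^ 2 <= 2 * (c / (INR N - 2) * Lip p dl) * r ^ 2).
    { apply Rmult_le_compat_l; auto. apply Rmult_le_pos; [lra|]. apply Rmult_le_pos; lra. }
    destruct H1 as [H1|H1]; [left; apply exp_increasing; auto|rewrite H1; lra]. }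
  apply Rmult_le_compat; try (apply Rmult_le_pos; [lra|apply pow2_ge_0]); try (left; apply exp_pos).
  - apply Rmult_le_compat_l; lra.
  - auto.
Qed.

Lemma pic_diff2 N p c dl n r : (3 <= N)%nat -> 0 < p -> 0 < dl < 1 -> 0 < c ->
  Rabs (pic N p c dl (S n) r - pic N p c dl n r) <= Ebd N p c dl r / 2 ^ n.
Proof.
  intros HN Hp Hdl Hc.
  pose proof (INRN2 N HN).
  assert (Ha : 0 < c / (INR N - 2)) by (apply Rdiv_lt_0_compat; lra).
  pose proof (Lip_pos p dl Hp).
  destruct (Rle_dec r 0) as [Hr|Hr].
  { rewrite !pic_neg by lra. rewrite Rminus_diag, Rabs_R0.
    apply Rdiv_le_0_compat; [apply Ebd_nonneg; auto|apply pow_lt; lra]. }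
  eapply Rle_trans; [apply pic_diff; auto; lra|].
  set (a := c / (INR N - 2)). fold a in Ha.
  set (x := a * Lip p dl * r ^ 2).
  assert (Hx : 0 <= x) by (unfold x; apply Rmult_le_pos; [apply Rmult_le_pos|apply pow2_ge_0]; lra).
  pose proof (term_le_exp (2 * x) n ltac:(lra)) as HT.
  assert (Hf : 0 < INR (fact n)) by (apply lt_0_INR, lt_O_fact).
  assert (H2n : 0 < 2 ^ n) by (apply pow_lt; lra).
  replace (a / 2 * (a * Lip p dl) ^ n / INR (fact n) * r ^ (2 * n + 2)) with
    (a / 2 * r ^ 2 * ((2 * x) ^ n / INR (fact n)) / 2 ^ n).
  - unfold Ebd. fold a. unfold Rdiv. apply Rmult_le_compat_r; [left; apply Rinv_0_lt_compat; auto|].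
    apply Rmult_le_compat_l; [apply Rmult_le_pos; [lra|apply pow2_ge_0]|].
    replace (2 * (a * Lip p dl) * r ^ 2) with (2 * x) by (unfold x; ring). auto.
  - unfold x. rewrite !Rpow_mult_distr. rewrite pow_add, pow_mult. field. split; lra.
Qed.

Lemma pic_cauchy N p c dl n k r : (3 <= N)%nat -> 0 < p -> 0 < dl < 1 -> 0 < c ->
  Rabs (pic N p c dl (n + k) r - pic N p c dl n r) <= 2 * Ebd N p c dl r / 2 ^ n - 2 * Ebd N p c dl r / 2 ^ (n + k).
Proof.
  intros HN Hp Hdl Hc. induction k.
  - rewrite Nat.add_0_r, Rminus_diag, Rabs_R0. lra.
  - replace (n + S k)%nat with (S (n + k)) by lia.
    eapply Rle_trans; [|apply Rle_refl].
    replace (pic N p c dl (S (n + k)) r - pic N p c dl n r) with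
      ((pic N p c dl (S (n + k)) r - pic N p c dl (n + k) r) + (pic N p c dl (n + k) r - pic N p c dl n r)) by ring.
    eapply Rle_trans; [apply Rabs_triang|].
    pose proof (pic_diff2 N p c dl (n + k) r HN Hp Hdl Hc).
    assert (0 < 2 ^ (n + k)) by (apply pow_lt; lra). assert (0 < 2 ^ n) by (apply pow_lt; lra).
    replace (2 * Ebd N p c dl r / 2 ^ n - 2 * Ebd N p c dl r / 2 ^ S (n + k)) with
      (Ebd N p c dl r / 2 ^ (n + k) + (2 * Ebd N p c dl r / 2 ^ n - 2 * Ebd N p c dl r / 2 ^ (n + k)))
      by (simpl; field; lra).
    lra.
Qed.

Lemma small_geom B eps : 0 < eps -> exists n, B / 2 ^ n < eps.
Proof.
  intros He. destruct (pow_lt_1_zero (/ 2) ltac:(rewrite Rabs_right; lra) (eps / (Rabs B + 1))) as [n Hn].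
  { apply Rdiv_lt_0_compat; [lra|pose proof (Rabs_pos B); lra]. }
  exists n. specialize (Hn n (le_n _)).
  rewrite pow_inv in Hn. assert (H2 : 0 < 2 ^ n) by (apply pow_lt; lra).
  rewrite Rabs_right in Hn by (left; apply Rinv_0_lt_compat; auto).
  pose proof (Rabs_pos B).
  apply Rle_lt_trans with (Rabs B * / 2 ^ n).
  { unfold Rdiv. apply Rmult_le_compat_r; [left; apply Rinv_0_lt_compat; auto|apply Rle_abs]. }
  apply Rle_lt_trans with ((Rabs B + 1) * / 2 ^ n).
  { apply Rmult_le_compat_r; [left; apply Rinv_0_lt_compat; auto|lra]. }
  apply (Rmult_lt_compat_l (Rabs B + 1)) in Hn; [|lra].
  replace ((Rabs B + 1) * (eps / (Rabs B + 1))) with eps in Hn by (field; lra). auto.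
Qed.

Definition sol N p c dl r := real (Lim_seq (fun n => pic N p c dl n r)).

Lemma sol_lim N p c dl r : (3 <= N)%nat -> 0 < p -> 0 < dl < 1 -> 0 < c ->
  is_lim_seq (fun n => pic N p c dl n r) (sol N p c dl r).
Proof.
  intros HN Hp Hdl Hc.
  assert (Hex : ex_finite_lim_seq (fun n => pic N p c dl n r)).
  { apply ex_lim_seq_cauchy_corr. intros eps.
    pose proof (Ebd_nonneg N p c dl r HN Hp Hc) as HE.
    destruct (small_geom (2 * Ebd N p c dl r) (eps / 2)) as [n0 Hn0]; [destruct eps; simpl; lra|].
    exists n0. intros n m Hn Hm.
    pose proof (pic_cauchy N p c dl n0 (n - n0) r HN Hp Hdl Hc) as A.
    pose proof (pic_cauchy N p c dl n0 (m - n0) r HN Hp Hdl Hc) as B.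
    replace (n0 + (n - n0))%nat with n in A by lia. replace (n0 + (m - n0))%nat with m in B by lia.
    assert (0 <= 2 * Ebd N p c dl r / 2 ^ n) by (apply Rdiv_le_0_compat; [lra|apply pow_lt; lra]).
    assert (0 <= 2 * Ebd N p c dl r / 2 ^ m) by (apply Rdiv_le_0_compat; [lra|apply pow_lt; lra]).
    replace (pic N p c dl n r - pic N p c dl m r) with
      ((pic N p c dl n r - pic N p c dl n0 r) - (pic N p c dl m r - pic N p c dl n0 r)) by ring.
    eapply Rle_lt_trans; [apply Rabs_triang|]. rewrite Rabs_Ropp. lra. }
  destruct Hex as [l Hl].
  unfold sol. rewrite (is_lim_seq_unique _ _ Hl). simpl. auto.
Qed.

Lemma sol_bound N p c dl n r : (3 <= N)%nat -> 0 < p -> 0 < dl < 1 -> 0 < c ->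
  Rabs (sol N p c dl r - pic N p c dl n r) <= 2 * Ebd N p c dl r / 2 ^ n.
Proof.
  intros HN Hp Hdl Hc.
  pose proof (sol_lim N p c dl r HN Hp Hdl Hc) as Hl.
  apply is_lim_seq_spec in Hl.
  apply Rnot_lt_le. intros Hlt.
  set (eta := Rabs (sol N p c dl r - pic N p c dl n r) - 2 * Ebd N p c dl r / 2 ^ n).
  assert (He : 0 < eta) by (unfold eta; lra).
  destruct (Hl (mkposreal eta He)) as [N1 HN1]. simpl in HN1.
  set (m := (Nat.max N1 n)).
  specialize (HN1 m ltac:(unfold m; lia)).
  pose proof (pic_cauchy N p c dl n (m - n) r HN Hp Hdl Hc) as A.
  replace (n + (m - n))%nat with m in A by (unfold m; lia).
  assert (0 <= 2 * Ebd N p c dl r / 2 ^ m).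
  { apply Rdiv_le_0_compat; [pose proof (Ebd_nonneg N p c dl r HN Hp Hc); lra|apply pow_lt; lra]. }
  assert (Rabs (sol N p c dl r - pic N p c dl n r) <=
          Rabs (pic N p c dl m r - sol N p c dl r) + Rabs (pic N p c dl m r - pic N p c dl n r)).
  { replace (sol N p c dl r - pic N p c dl n r) with
      (- (pic N p c dl m r - sol N p c dl r) + (pic N p c dl m r - pic N p c dl n r)) by ring.
    eapply Rle_trans; [apply Rabs_triang|]. rewrite Rabs_Ropp. lra. }
  unfold eta in *. lra.
Qed.

Lemma cont_eps_rev f x : continuous f x ->
  forall eps, 0 < eps -> exists d, 0 < d /\ forall y, Rabs (y - x) < d -> Rabs (f y - f x) < eps.
Proof.
  intros H. apply continuity_pt_filterlim in H. intros eps He.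
  destruct (H eps He) as [d [Hd Hy]]. exists d. split; auto.
  intros y Hyx. destruct (Req_dec y x) as [->|Hne].
  - rewrite Rminus_diag, Rabs_R0; auto.
  - apply Hy. split; [split; [exact I|auto]|]. apply Hyx.
Qed.

Lemma sol_cont N p c dl : (3 <= N)%nat -> 0 < p -> 0 < dl < 1 -> 0 < c -> cont (sol N p c dl).
Proof.
  intros HN Hp Hdl Hc x. apply cont_eps. intros eps He.
  set (R0 := Rabs x + 1).
  destruct (small_geom (2 * Ebd N p c dl R0) (eps / 3)) as [n Hn]; [lra|].
  destruct (cont_eps_rev _ x (pic_cont N p c dl n HN Hp Hdl x) (eps / 3)) as [d [Hd Hy]]; [lra|].
  exists (Rmin d 1). split; [apply Rmin_pos; lra|].
  intros y Hyx. assert (Rmin d 1 <= d) by apply Rmin_l. assert (Rmin d 1 <= 1) by apply Rmin_r.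
  assert (HyR : Rabs y <= Rabs R0).
  { unfold R0. rewrite (Rabs_right (Rabs x + 1)) by (pose proof (Rabs_pos x); lra).
    replace y with (x + (y - x)) by ring. eapply Rle_trans; [apply Rabs_triang|]. lra. }
  assert (HxR : Rabs x <= Rabs R0).
  { unfold R0. rewrite (Rabs_right (Rabs x + 1)) by (pose proof (Rabs_pos x); lra). lra. }
  pose proof (sol_bound N p c dl n y HN Hp Hdl Hc) as A.
  pose proof (sol_bound N p c dl n x HN Hp Hdl Hc) as B.
  pose proof (Ebd_mono N p c dl y R0 HN Hp Hc HyR).
  pose proof (Ebd_mono N p c dl x R0 HN Hp Hc HxR).
  assert (H2n : 0 < 2 ^ n) by (apply pow_lt; lra).
  assert (2 * Ebd N p c dl y / 2 ^ n <= 2 * Ebd N p c dl R0 / 2 ^ n).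
  { unfold Rdiv. apply Rmult_le_compat_r; [left; apply Rinv_0_lt_compat; auto|lra]. }
  assert (2 * Ebd N p c dl x / 2 ^ n <= 2 * Ebd N p c dl R0 / 2 ^ n).
  { unfold Rdiv. apply Rmult_le_compat_r; [left; apply Rinv_0_lt_compat; auto|lra]. }
  specialize (Hy y ltac:(lra)).
  replace (sol N p c dl y - sol N p c dl x) with
    ((sol N p c dl y - pic N p c dl n y) + (pic N p c dl n y - pic N p c dl n x) - (sol N p c dl x - pic N p c dl n x)) by ring.
  eapply Rle_lt_trans; [apply Rabs_triang|]. rewrite Rabs_Ropp.
  eapply Rle_lt_trans; [apply Rplus_le_compat_r; apply Rabs_triang|]. lra.
Qed.

Lemma sol_fix N p c dl r : (3 <= N)%nat -> 0 < p -> 0 < dl < 1 -> 0 < c ->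
  sol N p c dl r = Top N p c dl (sol N p c dl) r.
Proof.
  intros HN Hp Hdl Hc.
  pose proof (INRN2 N HN).
  set (a := c / (INR N - 2)).
  assert (Ha : 0 < a) by (unfold a; apply Rdiv_lt_0_compat; lra).
  pose proof (Lip_pos p dl Hp) as HL.
  set (E := Ebd N p c dl r).
  assert (HE : 0 <= E) by (apply Ebd_nonneg; auto).
  set (K := 2 * E + a * Lip p dl * E * r ^ 2).
  assert (Hkey : forall n, Rabs (sol N p c dl r - Top N p c dl (sol N p c dl) r) <= K / 2 ^ n).
  { intros n. assert (H2 : 0 < 2 ^ n) by (apply pow_lt; lra).
    pose proof (sol_bound N p c dl (S n) r HN Hp Hdl Hc) as A. fold E in A.
    assert (B : Rabs (pic N p c dl (S n) r - Top N p c dl (sol N p c dl) r) <= a * Lip p dl * E * r ^ 2 / 2 ^ n).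
    { change (pic N p c dl (S n) r) with (Top N p c dl (pic N p c dl n) r). unfold Top. fold a.
      destruct (Rle_dec r 0) as [Hr|Hr].
      { rewrite !Jop_nonpos by lra. rewrite Rmult_0_r, Rminus_diag, Rabs_R0.
        apply Rdiv_le_0_compat; auto. apply Rmult_le_pos; [|apply pow2_ge_0].
        apply Rmult_le_pos; auto. apply Rmult_le_pos; lra. }
      replace (1 - a * Jop N (fun t => Fcl p dl (pic N p c dl n t)) r - (1 - a * Jop N (fun t => Fcl p dl (sol N p c dl t)) r))
        with (a * (Jop N (fun t => Fcl p dl (sol N p c dl t)) r - Jop N (fun t => Fcl p dl (pic N p c dl n t)) r)) by ring.
      rewrite Rabs_mult, (Rabs_right a) by lra.
      pose proof (Jop_diff N (fun t => Fcl p dl (sol N p c dl t)) (fun t => Fcl p dl (pic N p c dl n t)) r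
        (Lip p dl * (2 * E / 2 ^ n)) 0 HN) as J.
      assert (Hb : 0 <= Lip p dl * (2 * E / 2 ^ n)) by (apply Rmult_le_pos; auto; apply Rdiv_le_0_compat; lra).
      specialize (J (cont_comp _ _ (sol_cont N p c dl HN Hp Hdl Hc) (Fcl_cont p dl Hp Hdl))
                    (cont_comp _ _ (pic_cont N p c dl n HN Hp Hdl) (Fcl_cont p dl Hp Hdl)) ltac:(lra) Hb).
      assert (J' : Rabs (Jop N (fun t => Fcl p dl (sol N p c dl t)) r - Jop N (fun t => Fcl p dl (pic N p c dl n t)) r)
                   <= Lip p dl * (2 * E / 2 ^ n) * r ^ 2 / 2).
      { eapply Rle_trans; [apply J|].
        - intros t Ht. eapply Rle_trans; [apply Fcl_lip; auto|]. simpl. rewrite Rmult_1_r.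
          apply Rmult_le_compat_l; auto.
          eapply Rle_trans; [apply sol_bound; auto|]. unfold Rdiv. apply Rmult_le_compat_r; [left; apply Rinv_0_lt_compat; auto|].
          apply Rmult_le_compat_l; [lra|]. apply Ebd_mono; auto. rewrite !Rabs_right; lra.
        - simpl. lra. }
      eapply Rle_trans; [apply Rmult_le_compat_l; [lra|apply J']|].
      right. field. lra. }
    replace (sol N p c dl r - Top N p c dl (sol N p c dl) r) with
      ((sol N p c dl r - pic N p c dl (S n) r) + (pic N p c dl (S n) r - Top N p c dl (sol N p c dl) r)) by ring.
    eapply Rle_trans; [apply Rabs_triang|].
    assert (2 * E / 2 ^ S n <= 2 * E / 2 ^ n).
    { simpl. unfold Rdiv. rewrite Rinv_mult. assert (0 <= 2 * E * / 2 ^ n) by (apply Rmult_le_pos; [lra|left; apply Rinv_0_lt_compat; auto]).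
      replace (2 * E * (/ 2 * / 2 ^ n)) with (/2 * (2 * E * / 2 ^ n)) by ring. lra. }
    unfold K. unfold Rdiv in *. lra. }
  apply Rminus_diag_uniq. destruct (Req_dec (sol N p c dl r - Top N p c dl (sol N p c dl) r) 0) as [H0|Hne]; auto.
  exfalso. destruct (small_geom K (Rabs (sol N p c dl r - Top N p c dl (sol N p c dl) r))) as [n Hn].
  - apply Rabs_pos_lt; auto.
  - specialize (Hkey n). lra.
Qed.

Lemma vanish_le h g : (forall t, 0 < t -> Rabs (h t) <= Rabs (g t)) -> vanish0 g -> vanish0 h.
Proof.
  intros Hle Hg eps He. destruct (Hg eps He) as [d [Hd H]]. exists d. split; auto.
  intros t Ht. eapply Rle_lt_trans; [apply Hle; lra|]. apply H; auto.
Qed.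

Lemma Jop_const N k r : (3 <= N)%nat -> 0 < r -> Jop N (fun _ => k) r = k * Jop N (fun _ => 1) r.
Proof.
  intros HN Hr. rewrite !Jop_kernel by (auto; apply cont_const).
  rewrite <- RInt_scal_R.
  - apply RInt_ext. intros; Req; ring.
  - apply cont_ex_RInt, cont_mult; [|apply cont_const]. apply cont_minus; [apply cont_id|].
    apply (cont_mult (fun x => x ^ (N - 1))); [apply cont_pow|apply cont_const].
Qed.


Definition Gf N p c dl := fun t => Fcl p dl (sol N p c dl t).
Definition dsol N p c dl r := - c * I2 N (Gf N p c dl) r / r ^ (N - 1).
Definition ddsol N p c dl r := - c * (Gf N p c dl r - (INR N - 1) * I2 N (Gf N p c dl) r / r ^ N).

Lemma Gf_cont N p c dl : (3 <= N)%nat -> 0 < p -> 0 < dl < 1 -> 0 < c -> cont (Gf N p c dl).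
Proof. intros. unfold Gf. apply (cont_comp (sol N p c dl) (Fcl p dl)); [apply sol_cont|apply Fcl_cont]; auto. Qed.

Lemma Gf_bounds N p c dl t : 0 < p -> 0 < dl < 1 -> 0 < Gf N p c dl t <= 1.
Proof. intros. unfold Gf. pose proof (Fcl_bounds p dl (sol N p c dl t)) as H1. pose proof (Rpower_pos' dl p). destruct H1; auto; lra. Qed.

Lemma sol_eq N p c dl r : (3 <= N)%nat -> 0 < p -> 0 < dl < 1 -> 0 < c ->
  sol N p c dl r = 1 - c / (INR N - 2) * Jop N (Gf N p c dl) r.
Proof. intros. rewrite sol_fix at 1 by auto. reflexivity. Qed.

Lemma sol_0 N p c dl : (3 <= N)%nat -> 0 < p -> 0 < dl < 1 -> 0 < c -> sol N p c dl 0 = 1.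
Proof. intros. rewrite sol_eq by auto. rewrite Jop_nonpos by lra. ring. Qed.

Lemma sol_le1 N p c dl r : (3 <= N)%nat -> 0 < p -> 0 < dl < 1 -> 0 < c -> sol N p c dl r <= 1.
Proof.
  intros HN Hp Hdl Hc. rewrite sol_eq by auto. pose proof (INRN2 N HN).
  assert (0 < c / (INR N - 2)) by (apply Rdiv_lt_0_compat; lra).
  destruct (Rle_dec r 0). { rewrite Jop_nonpos by lra. lra. }
  assert (0 <= Jop N (Gf N p c dl) r).
  { rewrite <- (Jop_zero N r). apply Jop_mono; auto; [apply cont_const|apply Gf_cont; auto|lra|].
    intros t _. pose proof (Gf_bounds N p c dl t Hp Hdl). lra. }
  assert (0 <= c / (INR N - 2) * Jop N (Gf N p c dl) r) by (apply Rmult_le_pos; lra). lra.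
Qed.

Lemma sol_near1 N p c dl r : (3 <= N)%nat -> 0 < p -> 0 < dl < 1 -> 0 < c -> 0 < r ->
  Rabs (sol N p c dl r - 1) <= c / (INR N - 2) * (r ^ 2 / 2).
Proof.
  intros HN Hp Hdl Hc Hr. rewrite sol_eq by auto. pose proof (INRN2 N HN).
  assert (0 < c / (INR N - 2)) by (apply Rdiv_lt_0_compat; lra).
  replace (1 - c / (INR N - 2) * Jop N (Gf N p c dl) r - 1) with (- (c / (INR N - 2) * (Jop N (Gf N p c dl) r - Jop N (fun _ => 0) r)))
    by (rewrite Jop_zero; ring).
  rewrite Rabs_Ropp, Rabs_mult, (Rabs_right (c / (INR N - 2))) by lra.
  apply Rmult_le_compat_l; [lra|].
  eapply Rle_trans; [apply (Jop_diff N _ _ r 1 0); auto; [apply Gf_cont; auto|apply cont_const|lra|]|].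
  - intros t _. rewrite Rminus_0_r. simpl. pose proof (Gf_bounds N p c dl t Hp Hdl). rewrite Rabs_right; lra.
  - simpl. lra.
Qed.

Lemma sol_upper N p c dl r : (3 <= N)%nat -> 0 < p -> 0 < dl < 1 -> 0 < c -> 0 < r ->
  sol N p c dl r <= 1 - c * Rpower dl p * r ^ 2 / (2 * INR N).
Proof.
  intros HN Hp Hdl Hc Hr. rewrite sol_eq by auto. pose proof (INRN2 N HN).
  assert (0 < c / (INR N - 2)) by (apply Rdiv_lt_0_compat; lra).
  assert (Jop N (fun _ => Rpower dl p) r <= Jop N (Gf N p c dl) r).
  { apply Jop_mono; auto; [apply cont_const|apply Gf_cont; auto|].
    intros t _. unfold Gf. apply Fcl_bounds; auto. }
  rewrite Jop_const, Jop_one in H1 by auto.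
  assert (c / (INR N - 2) * (Rpower dl p * (r ^ 2 * (INR N - 2) / (2 * INR N))) <= c / (INR N - 2) * Jop N (Gf N p c dl) r)
    by (apply Rmult_le_compat_l; lra).
  replace (c / (INR N - 2) * (Rpower dl p * (r ^ 2 * (INR N - 2) / (2 * INR N)))) with
    (c * Rpower dl p * r ^ 2 / (2 * INR N)) in H2 by (field; lra).
  lra.
Qed.

Lemma sol_deriv N p c dl r : (3 <= N)%nat -> 0 < p -> 0 < dl < 1 -> 0 < c -> 0 < r ->
  derivable_pt_lim (sol N p c dl) r (dsol N p c dl r).
Proof.
  intros HN Hp Hdl Hc Hr. pose proof (INRN2 N HN).
  apply (dpl_ext_loc (fun r => 1 - c / (INR N - 2) * Jop N (Gf N p c dl) r) _ r _ 1); [lra| |].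
  { intros y _. symmetry. apply sol_eq; auto. }
  apply dpl_eq with (0 - c / (INR N - 2) * ((INR N - 2) * I2 N (Gf N p c dl) r / r ^ (N - 1))).
  - apply derivable_pt_lim_minus; [apply derivable_pt_lim_const|].
    apply derivable_pt_lim_scal. apply Jop_deriv; auto. apply Gf_cont; auto.
  - unfold dsol. field. split; [apply pow_nonzero|]; lra.
Qed.

Lemma dsol_deriv N p c dl r : (3 <= N)%nat -> 0 < p -> 0 < dl < 1 -> 0 < c -> 0 < r ->
  derivable_pt_lim (dsol N p c dl) r (ddsol N p c dl r).
Proof.
  intros HN Hp Hdl Hc Hr.
  apply (dpl_ext_loc (fun r => - c * (I2 N (Gf N p c dl) r / r ^ (N - 1))) _ r _ 1); [lra| |].
  { intros y _. unfold dsol. unfold Rdiv. ring. }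
  unfold ddsol. apply derivable_pt_lim_scal. apply I2_ratio_deriv; auto. apply Gf_cont; auto.
Qed.

Lemma sol_ode N p c dl r : (3 <= N)%nat -> 0 < r ->
  ddsol N p c dl r + (INR N - 1) / r * dsol N p c dl r = - c * Gf N p c dl r.
Proof.
  intros HN Hr. unfold ddsol, dsol.
  assert (E : r ^ N = r * r ^ (N - 1)) by (replace N with (S (N - 1)) at 1 by lia; reflexivity).
  rewrite E. field. split; [apply pow_nonzero|]; lra.
Qed.

Lemma I2_Gf_pos N p c dl r : (3 <= N)%nat -> 0 < p -> 0 < dl < 1 -> 0 < c -> 0 < r ->
  0 < I2 N (Gf N p c dl) r.
Proof.
  intros HN Hp Hdl Hc Hr. unfold I2. apply RInt_gt_0; auto.
  - intros x Hx. apply Rmult_lt_0_compat; [apply pow_lt; lra|apply Gf_bounds; auto].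
  - intros x _. apply cont_mult; [apply cont_pow|apply Gf_cont; auto].
Qed.

Lemma dsol_neg N p c dl r : (3 <= N)%nat -> 0 < p -> 0 < dl < 1 -> 0 < c -> 0 < r -> dsol N p c dl r < 0.
Proof.
  intros HN Hp Hdl Hc Hr. unfold dsol. pose proof (I2_Gf_pos N p c dl r HN Hp Hdl Hc Hr).
  assert (0 < r ^ (N - 1)) by (apply pow_lt; lra).
  assert (0 < c * I2 N (Gf N p c dl) r / r ^ (N - 1)) by (apply Rdiv_lt_0_compat; [apply Rmult_lt_0_compat|]; lra).
  unfold Rdiv in *. lra.
Qed.

Lemma sol_decr N p c dl r1 r2 : (3 <= N)%nat -> 0 < p -> 0 < dl < 1 -> 0 < c -> 0 < r1 -> r1 < r2 ->
  sol N p c dl r2 < sol N p c dl r1.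
Proof.
  intros HN Hp Hdl Hc H1 H2.
  destruct (MVT_cor2 (sol N p c dl) (dsol N p c dl) r1 r2 H2) as [z [Hz1 Hz2]].
  { intros z Hz. apply sol_deriv; auto; lra. }
  pose proof (dsol_neg N p c dl z HN Hp Hdl Hc ltac:(lra)).
  assert (dsol N p c dl z * (r2 - r1) < 0) by (apply Rmult_neg_pos; lra). lra.
Qed.

Lemma sol_lt1 N p c dl r : (3 <= N)%nat -> 0 < p -> 0 < dl < 1 -> 0 < c -> 0 < r -> sol N p c dl r < 1.
Proof.
  intros HN Hp Hdl Hc Hr. pose proof (sol_upper N p c dl r HN Hp Hdl Hc Hr).
  pose proof (Rpower_pos' dl p). pose proof (INRN2 N HN).
  assert (0 < c * Rpower dl p * r ^ 2 / (2 * INR N)).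
  { apply Rdiv_lt_0_compat; [|lra]. apply Rmult_lt_0_compat; [apply Rmult_lt_0_compat|apply pow_lt]; lra. }
  lra.
Qed.

Lemma sol_vanish N p c dl : (3 <= N)%nat -> 0 < p -> 0 < dl < 1 -> 0 < c ->
  vanish0 (fun r => sol N p c dl r - 1).
Proof.
  intros HN Hp Hdl Hc. apply (vanish_le _ (fun t => c / (INR N - 2) / 2 * t ^ 2)).
  - intros t Ht. pose proof (INRN2 N HN). rewrite (Rabs_right (c / (INR N - 2) / 2 * t ^ 2)).
    + eapply Rle_trans; [apply sol_near1; auto|]. right; field; lra.
    + apply Rle_ge, Rmult_le_pos; [|apply pow2_ge_0]. apply Rlt_le, Rdiv_lt_0_compat; [apply Rdiv_lt_0_compat|]; lra.
  - apply vanish_pow; lia.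
Qed.

Lemma dsol_vanish N p c dl : (3 <= N)%nat -> 0 < p -> 0 < dl < 1 -> 0 < c ->
  vanish0 (fun r => r ^ (N - 1) * dsol N p c dl r).
Proof.
  intros HN Hp Hdl Hc. apply (vanish_le _ (fun t => c * t ^ N)).
  - intros t Ht. unfold dsol.
    assert (Hp1 : 0 < t ^ (N - 1)) by (apply pow_lt; lra).
    replace (t ^ (N - 1) * (- c * I2 N (Gf N p c dl) t / t ^ (N - 1))) with (- (c * I2 N (Gf N p c dl) t)) by (field; lra).
    rewrite Rabs_Ropp. pose proof (I2_Gf_pos N p c dl t HN Hp Hdl Hc Ht).
    rewrite !Rabs_right.
    + apply Rmult_le_compat_l; [lra|].
      apply Rle_trans with (RInt (fun s => s ^ (N - 1)) 0 t).
      * unfold I2. apply RInt_le; [lra| | |].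
        -- apply cont_ex_RInt, cont_mult; [apply cont_pow|apply Gf_cont; auto].
        -- apply cont_ex_RInt, cont_pow.
        -- intros x Hx. pose proof (Gf_bounds N p c dl x Hp Hdl). assert (0 < x ^ (N - 1)) by (apply pow_lt; lra).
           rewrite <- (Rmult_1_r (x ^ (N - 1))) at 2. apply Rmult_le_compat_l; lra.
      * rewrite RInt_pow. replace (S (N - 1)) with N by lia.
        assert (1 <= INR N) by (rewrite <- INR_1; apply le_INR; lia).
        assert (0 < t ^ N) by (apply pow_lt; lra).
        unfold Rdiv. rewrite <- (Rmult_1_r (t ^ N)) at 2. apply Rmult_le_compat_l; [lra|].
        rewrite <- Rinv_1. apply Rinv_le_contravar; lra.
    + apply Rle_ge, Rmult_le_pos; [lra|apply pow_le; lra].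
    + apply Rle_ge, Rmult_le_pos; lra.
  - apply vanish_pow; lia.
Qed.

Lemma rd_exists N p c dl : (3 <= N)%nat -> 0 < p -> 0 < dl < 1 -> 0 < c ->
  exists r, 0 < r /\ sol N p c dl r = dl.
Proof.
  intros HN Hp Hdl Hc.
  pose proof (Rpower_pos' dl p). pose proof (INRN2 N HN).
  set (R0 := 2 * INR N / (c * Rpower dl p) + 1).
  assert (HR0 : 1 < R0) by (unfold R0; assert (0 < 2 * INR N / (c * Rpower dl p)) by (apply Rdiv_lt_0_compat; [lra|apply Rmult_lt_0_compat; lra]); lra).
  assert (Hs : sol N p c dl R0 < dl).
  { pose proof (sol_upper N p c dl R0 HN Hp Hdl Hc ltac:(lra)).
    assert (R0 <= R0 ^ 2) by (simpl; rewrite Rmult_1_r; rewrite <- (Rmult_1_r R0) at 1; apply Rmult_le_compat_l; lra).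
    assert (2 * INR N / (c * Rpower dl p) <= R0 ^ 2) by (unfold R0 in *; lra).
    assert (1 <= c * Rpower dl p * R0 ^ 2 / (2 * INR N)).
    { assert (HX : 0 < c * Rpower dl p) by (apply Rmult_lt_0_compat; lra).
      assert (H5 : c * Rpower dl p * (2 * INR N / (c * Rpower dl p)) <= c * Rpower dl p * R0 ^ 2)
        by (apply Rmult_le_compat_l; lra).
      replace (c * Rpower dl p * (2 * INR N / (c * Rpower dl p))) with (2 * INR N) in H5 by (field; lra).
      apply Rmult_le_reg_r with (2 * INR N); [lra|].
      replace (c * Rpower dl p * R0 ^ 2 / (2 * INR N) * (2 * INR N)) with (c * Rpower dl p * R0 ^ 2) by (field; lra).
      lra. }
    lra. }
  destruct (IVT_gen_consistent (sol N p c dl) 0 R0 dl) as [x [Hx1 Hx2]].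
  { apply sol_cont; auto. }
  { rewrite sol_0 by auto. rewrite Rmin_right, Rmax_left by lra. lra. }
  rewrite Rmin_left, Rmax_right in Hx1 by lra.
  exists x. split; auto. destruct (Req_dec x 0) as [->|]; [|lra].
  rewrite sol_0 in Hx2 by auto. lra.
Qed.

Lemma sol_range_rd N p c dl rd r : (3 <= N)%nat -> 0 < p -> 0 < dl < 1 -> 0 < c ->
  0 < rd -> sol N p c dl rd = dl -> 0 <= r <= rd -> dl <= sol N p c dl r <= 1.
Proof.
  intros HN Hp Hdl Hc Hrd Hs Hr. split; [|apply sol_le1; auto].
  destruct (Req_dec r rd) as [->|Hne]; [lra|].
  destruct (Req_dec r 0) as [->|Hne0]; [rewrite sol_0 by auto; lra|].
  assert (sol N p c dl rd < sol N p c dl r) by (apply sol_decr; auto; lra). lra.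
Qed.

Lemma Gf_on_rd N p c dl rd r : (3 <= N)%nat -> 0 < p -> 0 < dl < 1 -> 0 < c ->
  0 < rd -> sol N p c dl rd = dl -> 0 <= r <= rd ->
  Gf N p c dl r = rpow (sol N p c dl r) p.
Proof.
  intros HN Hp Hdl Hc Hrd Hs Hr. pose proof (sol_range_rd N p c dl rd r HN Hp Hdl Hc Hrd Hs Hr).
  unfold Gf. rewrite Fcl_id by lra. rewrite rpow_pos_eq by lra. auto.
Qed.

Lemma sol_consistent N p c d1 d2 rd : (3 <= N)%nat -> 0 < p -> 0 < c -> 0 < d2 <= d1 -> d1 < 1 ->
  0 < rd -> sol N p c d1 rd = d1 -> forall r, 0 <= r <= rd -> sol N p c d2 r = sol N p c d1 r.
Proof.
  intros HN Hp Hc Hd Hd1 Hrd Hs.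
  assert (Hdl1 : 0 < d1 < 1) by lra. assert (Hdl2 : 0 < d2 < 1) by lra.
  pose proof (INRN2 N HN).
  assert (Hopen : forall r, 0 < r < rd -> sol N p c d2 r = sol N p c d1 r).
  { apply (gronwall N c (Lip p d2) rd (c / (INR N - 2) * rd ^ 2) (sol N p c d2) (sol N p c d1)
       (dsol N p c d2) (dsol N p c d1) (ddsol N p c d2) (ddsol N p c d1) (Gf N p c d2) (Gf N p c d1)); auto; try lra.
    - apply Lip_pos; auto.
    - intros r Hr. split; [apply sol_deriv; auto; lra|]. split; [apply dsol_deriv; auto; lra|]. apply sol_ode; auto; lra.
    - intros r Hr. split; [apply sol_deriv; auto; lra|]. split; [apply dsol_deriv; auto; lra|]. apply sol_ode; auto; lra.
    - intros r Hr. pose proof (sol_range_rd N p c d1 rd r HN Hp Hdl1 Hc Hrd Hs ltac:(lra)).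
      unfold Gf at 2. rewrite Fcl_id by lra. rewrite <- (Fcl_id p d2 (sol N p c d1 r)) by lra.
      apply Fcl_lip; auto.
    - intros r Hr. pose proof (sol_near1 N p c d1 r HN Hp Hdl1 Hc ltac:(lra)).
      pose proof (sol_near1 N p c d2 r HN Hp Hdl2 Hc ltac:(lra)).
      assert (r ^ 2 <= rd ^ 2) by (apply pow_incr; lra).
      assert (c / (INR N - 2) * (r ^ 2 / 2) <= c / (INR N - 2) * (rd ^ 2 / 2)).
      { apply Rmult_le_compat_l; [apply Rlt_le, Rdiv_lt_0_compat; lra|lra]. }
      replace (sol N p c d2 r - sol N p c d1 r) with ((sol N p c d2 r - 1) - (sol N p c d1 r - 1)) by ring.
      eapply Rle_trans; [apply Rabs_triang|]. rewrite Rabs_Ropp. lra.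
    - eapply vanish_ext; [|apply (vanish_plus _ _ (sol_vanish N p c d2 HN Hp Hdl2 Hc) (vanish_opp _ (sol_vanish N p c d1 HN Hp Hdl1 Hc)))].
      intros t _. simpl. ring.
    - eapply vanish_ext; [|apply (vanish_plus _ _ (dsol_vanish N p c d2 HN Hp Hdl2 Hc) (vanish_opp _ (dsol_vanish N p c d1 HN Hp Hdl1 Hc)))].
      intros t _. simpl. ring. }
  intros r Hr.
  destruct (Req_dec r 0) as [->|H0]; [rewrite !sol_0 by auto; auto|].
  destruct (Req_dec r rd) as [->|H1]; [|apply Hopen; lra].
  apply Rminus_diag_uniq. destruct (Req_dec (sol N p c d2 rd - sol N p c d1 rd) 0) as [|Hne]; auto. exfalso.
  set (e := Rabs (sol N p c d2 rd - sol N p c d1 rd) / 2).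
  assert (He : 0 < e) by (unfold e; apply Rdiv_lt_0_compat; [apply Rabs_pos_lt; auto|lra]).
  destruct (cont_eps_rev _ rd (sol_cont N p c d2 HN Hp Hdl2 Hc rd) e He) as [da [Hda A]].
  destruct (cont_eps_rev _ rd (sol_cont N p c d1 HN Hp Hdl1 Hc rd) e He) as [db [Hdb B]].
  set (y := rd - Rmin (rd / 2) (Rmin da db / 2)).
  assert (0 < Rmin da db) by (apply Rmin_pos; lra).
  assert (Rmin da db <= da) by apply Rmin_l. assert (Rmin da db <= db) by apply Rmin_r.
  assert (0 < Rmin (rd / 2) (Rmin da db / 2)) by (apply Rmin_pos; lra).
  assert (Rmin (rd / 2) (Rmin da db / 2) <= rd / 2) by apply Rmin_l.
  assert (Rmin (rd / 2) (Rmin da db / 2) <= Rmin da db / 2) by apply Rmin_r.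
  assert (Hy : Rabs (y - rd) < Rmin da db).
  { unfold y. replace (rd - Rmin (rd / 2) (Rmin da db / 2) - rd) with (- Rmin (rd / 2) (Rmin da db / 2)) by ring.
    rewrite Rabs_Ropp, Rabs_right; lra. }
  specialize (A y ltac:(lra)). specialize (B y ltac:(lra)).
  rewrite Hopen in A by (unfold y; lra).
  assert (Rabs (sol N p c d2 rd - sol N p c d1 rd) <= Rabs (sol N p c d1 y - sol N p c d2 rd) + Rabs (sol N p c d1 y - sol N p c d1 rd)).
  { replace (sol N p c d2 rd - sol N p c d1 rd) with (- (sol N p c d1 y - sol N p c d2 rd) + (sol N p c d1 y - sol N p c d1 rd)) by ring.
    eapply Rle_trans; [apply Rabs_triang|]. rewrite Rabs_Ropp. lra. }
  unfold e in *. lra.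
Qed.

Lemma RInt_pow_scal k K r : RInt (fun t => t ^ k * K) 0 r = K * (r ^ S k / INR (S k)).
Proof.
  rewrite <- RInt_pow. rewrite <- RInt_scal_R by (apply cont_ex_RInt, cont_pow).
  apply RInt_ext. intros; Req; ring.
Qed.

Lemma dsol_lower N p c dl r0 r : (3 <= N)%nat -> 0 < p -> 0 < dl <= 1/2 -> 0 < c -> 0 < r0 ->
  sol N p c dl r0 = 1/2 -> r0 <= r ->
  dsol N p c dl r <= - (c * Rpower (1/2) p * r0 ^ N / INR N) / r ^ (N - 1).
Proof.
  intros HN Hp Hdl Hc Hr0 Hs Hr.
  assert (Hdl' : 0 < dl < 1) by lra.
  assert (Hrp : 0 < r ^ (N - 1)) by (apply pow_lt; lra).
  assert (HI : Rpower (1/2) p * r0 ^ N / INR N <= I2 N (Gf N p c dl) r).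
  { unfold I2.
    assert (Hc1 : cont (fun t => t ^ (N - 1) * Gf N p c dl t)) by (apply cont_mult; [apply cont_pow|apply Gf_cont; auto]).
    rewrite <- (RInt_Chasles (V := R_CompleteNormedModule) _ 0 r0 r) by (apply cont_ex_RInt; auto).
    change (plus ?x ?y) with (x + y).
    assert (0 <= RInt (fun t => t ^ (N - 1) * Gf N p c dl t) r0 r).
    { apply RInt_ge_0; auto. apply cont_ex_RInt; auto. intros x Hx.
      apply Rmult_le_pos; [apply pow_le; lra|]. left; apply Gf_bounds; auto. }
    assert (Rpower (1/2) p * r0 ^ N / INR N <= RInt (fun t => t ^ (N - 1) * Gf N p c dl t) 0 r0); [|lra].
    replace (Rpower (1/2) p * r0 ^ N / INR N) with (RInt (fun t => t ^ (N - 1) * Rpower (1/2) p) 0 r0).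
    2:{ rewrite RInt_pow_scal. replace (S (N - 1)) with N by lia. unfold Rdiv. Req. ring. }
    apply RInt_le; [lra| | |].
    - apply cont_ex_RInt, cont_mult; [apply cont_pow|apply cont_const].
    - apply cont_ex_RInt; auto.
    - intros x Hx. apply Rmult_le_compat_l; [apply pow_le; lra|].
      unfold Gf. rewrite <- (Fcl_id p dl (1/2)) by lra. apply Fcl_mono; auto.
      rewrite <- Hs. left. apply sol_decr; auto; lra. }
  unfold dsol. unfold Rdiv.
  apply Rmult_le_compat_r; [left; apply Rinv_0_lt_compat; auto|].
  assert (c * (Rpower (1 / 2) p * r0 ^ N / INR N) <= c * I2 N (Gf N p c dl) r) by (apply Rmult_le_compat_l; lra).
  unfold Rdiv in H. lra.
Qed.

Lemma Rpower_exp_mono x p q : 0 < x <= 1 -> p <= q -> Rpower x q <= Rpower x p.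
Proof.
  intros Hx Hpq. unfold Rpower.
  assert (ln x <= 0) by (rewrite <- ln_1; destruct (Req_dec x 1) as [->|]; [lra|left; apply ln_increasing; lra]).
  assert (q * ln x <= p * ln x) by nra.
  destruct H0 as [H0|H0]; [left; apply exp_increasing; auto|rewrite H0; lra].
Qed.

Lemma dsol_upper N p c dl rd q r : (3 <= N)%nat -> 0 < p -> 0 < dl < 1 -> 0 < c ->
  0 < rd -> sol N p c dl rd = dl -> p <= q -> 0 < r <= rd ->
  dsol N p c dl r <= - (c / INR N) * r * Rpower (sol N p c dl r) q.
Proof.
  intros HN Hp Hdl Hc Hrd Hs Hpq Hr.
  pose proof (sol_range_rd N p c dl rd r HN Hp Hdl Hc Hrd Hs ltac:(lra)) as Hu.
  assert (HG : Gf N p c dl r = Rpower (sol N p c dl r) p) by (unfold Gf; apply Fcl_id; lra).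
  assert (Hq : Rpower (sol N p c dl r) q <= Gf N p c dl r) by (rewrite HG; apply Rpower_exp_mono; lra).
  assert (HI : Gf N p c dl r * (r ^ N / INR N) <= I2 N (Gf N p c dl) r).
  { unfold I2. replace (Gf N p c dl r * (r ^ N / INR N)) with (RInt (fun t => t ^ (N - 1) * Gf N p c dl r) 0 r).
    2:{ rewrite RInt_pow_scal. replace (S (N - 1)) with N by lia. Req. ring. }
    apply RInt_le; [lra| | |].
    - apply cont_ex_RInt, cont_mult; [apply cont_pow|apply cont_const].
    - apply cont_ex_RInt, cont_mult; [apply cont_pow|apply Gf_cont; auto].
    - intros x Hx. apply Rmult_le_compat_l; [apply pow_le; lra|].
      unfold Gf. apply Fcl_mono; auto. left. apply sol_decr; auto; lra. }
  unfold dsol.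
  assert (Hrp : 0 < r ^ (N - 1)) by (apply pow_lt; lra).
  assert (E : r ^ N = r * r ^ (N - 1)) by (replace N with (S (N - 1)) at 1 by lia; reflexivity).
  rewrite E in HI.
  pose proof (INRN2 N HN).
  apply Rle_trans with (- c * (Gf N p c dl r * (r * r ^ (N - 1) / INR N)) / r ^ (N - 1)).
  - unfold Rdiv. apply Rmult_le_compat_r; [left; apply Rinv_0_lt_compat; auto|].
    assert (c * (Gf N p c dl r * (r * r ^ (N - 1) * / INR N)) <= c * I2 N (Gf N p c dl) r)
      by (apply Rmult_le_compat_l; [lra|unfold Rdiv in HI; lra]). lra.
  - replace (- c * (Gf N p c dl r * (r * r ^ (N - 1) / INR N)) / r ^ (N - 1)) with
      (- (c / INR N) * r * Gf N p c dl r) by (field; lra).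
    assert (0 <= c / INR N * r) by (apply Rmult_le_pos; [apply Rlt_le, Rdiv_lt_0_compat|]; lra).
    assert (c / INR N * r * Rpower (sol N p c dl r) q <= c / INR N * r * Gf N p c dl r) by (apply Rmult_le_compat_l; auto).
    lra.
Qed.

Lemma deriv_inv_pow K k s : 0 < s ->
  derivable_pt_lim (fun s => - (K / s ^ S k)) s (K * INR (S k) / s ^ (S (S k))).
Proof.
  intros Hs. apply is_derive_Reals. assert (Hk : s ^ k <> 0) by (apply pow_nonzero; lra). auto_derive.
  - apply Rmult_integral_contrapositive; split; lra.
  - change (match k with 0%nat => 1 | S _ => INR k + 1 end) with (INR (S k)). change (s ^ S (S k)) with (s * (s * s ^ k)). field. lra.
Qed.

Lemma w_bound N p c dl rd q rho : (3 <= N)%nat -> 0 < p -> 0 < dl < 1 -> 0 < c ->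
  0 < rd -> sol N p c dl rd = dl -> p <= q -> 1 < q -> 0 < rho < rd ->
  (q - 1) * c / (2 * INR N) * rho ^ 2 <= Rpower (sol N p c dl rho) (1 - q).
Proof.
  intros HN Hp Hdl Hc Hrd Hs Hpq Hq Hrho.
  pose proof (INRN2 N HN).
  set (K := (q - 1) * c / (2 * INR N)).
  assert (HK : 0 < K) by (unfold K; apply Rdiv_lt_0_compat; [apply Rmult_lt_0_compat|]; lra).
  set (W := fun s => Rpower (sol N p c dl s) (1 - q) - K * s ^ 2).
  assert (HW : forall s, 0 < s <= rho -> W s <= W rho).
  { intros s Hs'. apply (incr_deriv W (fun s => (1 - q) * Rpower (sol N p c dl s) (1 - q - 1) * dsol N p c dl s - K * (INR 2 * s ^ 1)) 0 rd); try lra.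
    - intros x Hx. unfold W. apply derivable_pt_lim_minus.
      + pose proof (sol_range_rd N p c dl rd x HN Hp Hdl Hc Hrd Hs ltac:(lra)).
        apply (derivable_pt_lim_comp (sol N p c dl) (fun y => Rpower y (1 - q))).
        * apply sol_deriv; auto; lra.
        * apply derivable_pt_lim_power. lra.
      + apply derivable_pt_lim_scal. apply (derivable_pt_lim_pow x 2).
    - intros x Hx.
      pose proof (sol_range_rd N p c dl rd x HN Hp Hdl Hc Hrd Hs ltac:(lra)) as Hu.
      pose proof (dsol_upper N p c dl rd q x HN Hp Hdl Hc Hrd Hs Hpq ltac:(lra)) as Hd.
      replace (1 - q - 1) with (- q) by ring.
      assert (Hk : (1 - q) * Rpower (sol N p c dl x) (- q) < 0).
      { pose proof (Rpower_pos' (sol N p c dl x) (- q)). assert (0 < (q - 1) * Rpower (sol N p c dl x) (- q)) by (apply Rmult_lt_0_compat; lra). lra. }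
      assert ((1 - q) * Rpower (sol N p c dl x) (- q) * (- (c / INR N) * x * Rpower (sol N p c dl x) q) <=
              (1 - q) * Rpower (sol N p c dl x) (- q) * dsol N p c dl x).
      { apply Rmult_le_compat_neg_l; lra. }
      assert (Hone : Rpower (sol N p c dl x) (- q) * Rpower (sol N p c dl x) q = 1).
      { rewrite <- Rpower_plus. replace (- q + q) with 0 by ring. apply Rpower_O. lra. }
      replace ((1 - q) * Rpower (sol N p c dl x) (- q) * (- (c / INR N) * x * Rpower (sol N p c dl x) q)) with
        ((q - 1) * (c / INR N) * x * (Rpower (sol N p c dl x) (- q) * Rpower (sol N p c dl x) q)) in H0 by ring.
      rewrite Hone in H0. unfold K. simpl. 
      replace ((q - 1) * c / (2 * INR N) * ((1 + 1) * (x * 1))) with ((q - 1) * (c / INR N) * x * 1) by (field; lra).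
      lra. }
  assert (HWr : 0 <= W rho).
  { apply Rnot_lt_le. intros Hneg.
    set (s := Rmin (rho / 2) (Rmin 1 (- W rho / (K + 1)))).
    assert (0 < - W rho / (K + 1)) by (apply Rdiv_lt_0_compat; lra).
    assert (Hs0 : 0 < s) by (unfold s; apply Rmin_pos; [lra|apply Rmin_pos; lra]).
    assert (s <= rho / 2) by apply Rmin_l.
    assert (s <= Rmin 1 (- W rho / (K + 1))) by apply Rmin_r.
    assert (Rmin 1 (- W rho / (K + 1)) <= 1) by apply Rmin_l.
    assert (Rmin 1 (- W rho / (K + 1)) <= - W rho / (K + 1)) by apply Rmin_r.
    specialize (HW s ltac:(lra)).
    unfold W in HW at 1. pose proof (Rpower_pos' (sol N p c dl s) (1 - q)).
    assert (s ^ 2 <= s) by (simpl; rewrite Rmult_1_r; rewrite <- (Rmult_1_r s) at 3; apply Rmult_le_compat_l; lra).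
    assert (K * s ^ 2 <= K * s) by (apply Rmult_le_compat_l; lra).
    assert (K * s <= K * (- W rho / (K + 1))) by (apply Rmult_le_compat_l; lra).
    assert (K * (- W rho / (K + 1)) < - W rho).
    { apply (Rmult_lt_reg_r (K + 1)); [lra|]. replace (K * (- W rho / (K + 1)) * (K + 1)) with (K * - W rho) by (field; lra).
      nra. }
    lra. }
  unfold W in HWr. fold K. lra.
Qed.

Lemma u_lower N p c dl r0 rd rho : (3 <= N)%nat -> 0 < p -> 0 < dl <= 1/2 -> 0 < c -> 0 < r0 ->
  sol N p c dl r0 = 1/2 -> r0 < rho -> rho <= rd -> sol N p c dl rd = dl ->
  (c * Rpower (1/2) p * r0 ^ N / INR N) / (INR N - 2) * (/ rho ^ (N - 2) - / rd ^ (N - 2)) <= sol N p c dl rho.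
Proof.
  intros HN Hp Hdl Hc Hr0 Hs Hrho Hrd Hsd.
  pose proof (INRN2 N HN).
  set (A := c * Rpower (1/2) p * r0 ^ N / INR N).
  set (K := A / (INR N - 2)).
  assert (exists k, N = S (S (S k))) as [k Ek] by (exists (N-3)%nat; lia).
  assert (E2 : (N - 2)%nat = S k) by lia. assert (E1 : (N - 1)%nat = S (S k)) by lia.
  assert (HH : sol N p c dl rd + - (K / rd ^ S k) <= sol N p c dl rho + - (K / rho ^ S k)).
  { apply (decr_deriv (fun s => sol N p c dl s + - (K / s ^ S k)) (fun s => dsol N p c dl s + K * INR (S k) / s ^ S (S k)) r0 (rd + 1)); try lra.
    - intros x Hx. apply derivable_pt_lim_plus; [apply sol_deriv; auto; lra|]. apply deriv_inv_pow. lra.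
    - intros x Hx. pose proof (dsol_lower N p c dl r0 x HN Hp Hdl Hc Hr0 Hs ltac:(lra)) as Hd.
      fold A in Hd. rewrite E1 in Hd.
      replace (K * INR (S k)) with A.
      + unfold Rdiv in *. lra.
      + unfold K. rewrite <- E2. rewrite minus_INR by lia. simpl (INR 2). field. lra. }
  rewrite E2. fold A. fold K.
  pose proof (Rpower_pos' (1/2) p).
  replace (K * (/ rho ^ S k - / rd ^ S k)) with (K / rho ^ S k - K / rd ^ S k) by (unfold Rdiv; ring).
  lra.
Qed.

Lemma Rpower_base_anti x y e : 0 < x <= y -> e <= 0 -> Rpower y e <= Rpower x e.
Proof.
  intros Hxy He.
  assert (E : forall z, Rpower z e = / Rpower z (- e)) by (intro; rewrite <- Rpower_Ropp; f_equal; ring).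
  rewrite !E. apply Rinv_le_contravar; [apply Rpower_pos'|]. apply Rle_Rpower_l; lra.
Qed.

Lemma Rpower_inv_base x e : 0 < x -> Rpower (/ x) e = Rpower x (- e).
Proof. intros Hx. unfold Rpower. rewrite ln_Rinv by auto. f_equal. ring. Qed.

Lemma Rpower_root x e : 0 < x -> 0 < e -> Rpower (Rpower x e) (1 / e) = x.
Proof. intros Hx He. rewrite Rpower_mult. replace (e * (1 / e)) with 1 by (field; lra). apply Rpower_1; auto. Qed.

Definition qexp N p := Rmax p ((INR N - 1) / (INR N - 2)).

Lemma qexp_props N p : (3 <= N)%nat -> 0 < p -> p < INR N / (INR N - 2) ->
  p <= qexp N p /\ 1 < qexp N p /\ 0 < 2 - INR (N - 2) * (qexp N p - 1).
Proof.
  intros HN Hp Hpn. pose proof (INRN2 N HN).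
  replace (INR (N - 2)) with (INR N - 2) by (rewrite minus_INR by lia; simpl; ring).
  assert (1 < (INR N - 1) / (INR N - 2)).
  { apply (Rmult_lt_reg_r (INR N - 2)); auto. unfold Rdiv. rewrite Rmult_assoc, Rinv_l; lra. }
  unfold qexp, Rmax. destruct (Rle_dec p ((INR N - 1) / (INR N - 2))).
  - split; [auto|]. split; [auto|]. replace ((INR N - 2) * ((INR N - 1) / (INR N - 2) - 1)) with 1 by (field; lra). lra.
  - split; [lra|]. split; [lra|].
    assert (p * (INR N - 2) < INR N).
    { apply (Rmult_lt_compat_r (INR N - 2)) in Hpn; auto. unfold Rdiv in Hpn. rewrite Rmult_assoc, Rinv_l in Hpn; lra. }
    lra.
Qed.

Definition rd_cst N p c r0 :=
  let q := qexp N p in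
  let A := c * Rpower (1/2) p * r0 ^ N / INR N in
  let B := A / (INR N - 2) / 2 in
  let e := 2 - INR (N - 2) * (q - 1) in
  Rmax (2 * r0) (2 * Rpower (Rpower B (1 - q) / ((q - 1) * c / (2 * INR N))) (1 / e)).

Lemma rd_bound N p c dl r0 rd : (3 <= N)%nat -> 0 < p -> p < INR N / (INR N - 2) -> 0 < dl <= 1/2 -> 0 < c -> 0 < r0 ->
  sol N p c dl r0 = 1/2 -> 0 < rd -> sol N p c dl rd = dl -> rd <= rd_cst N p c r0.
Proof.
  intros HN Hp Hpn Hdl Hc Hr0 Hs Hrd Hsd.
  assert (Hdl' : 0 < dl < 1) by lra.
  pose proof (INRN2 N HN).
  destruct (qexp_props N p HN Hp Hpn) as [Hpq [Hq1 He]].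
  unfold rd_cst. set (q := qexp N p) in *.
  set (A := c * Rpower (1/2) p * r0 ^ N / INR N).
  assert (HA : 0 < A).
  { unfold A. pose proof (Rpower_pos' (1/2) p). apply Rdiv_lt_0_compat; [|lra].
    apply Rmult_lt_0_compat; [apply Rmult_lt_0_compat; lra|apply pow_lt; lra]. }
  set (B := A / (INR N - 2) / 2).
  assert (HB : 0 < B) by (unfold B; apply Rdiv_lt_0_compat; [apply Rdiv_lt_0_compat|]; lra).
  set (e := 2 - INR (N - 2) * (q - 1)). fold e in He.
  set (K0 := (q - 1) * c / (2 * INR N)).
  assert (HK0 : 0 < K0) by (unfold K0; apply Rdiv_lt_0_compat; [apply Rmult_lt_0_compat|]; lra).
  destruct (Rle_dec rd (2 * r0)) as [Hsmall|Hbig].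
  { eapply Rle_trans; [|apply Rmax_l]. auto. }
  eapply Rle_trans; [|apply Rmax_r].
  set (rho := rd / 2).
  assert (Hrho : r0 < rho < rd) by (unfold rho; lra).
  assert (H1 := w_bound N p c dl rd q rho HN Hp Hdl' Hc Hrd Hsd Hpq Hq1 ltac:(lra)). fold K0 in H1.
  assert (H2 := u_lower N p c dl r0 rd rho HN Hp Hdl Hc Hr0 Hs ltac:(lra) ltac:(lra) Hsd). fold A in H2.
  assert (Hrp : 0 < rho ^ (N - 2)) by (apply pow_lt; lra).
  assert (H2' : B * / rho ^ (N - 2) <= sol N p c dl rho).
  { eapply Rle_trans; [|apply H2]. unfold B.
    replace rd with (2 * rho) by (unfold rho; field). rewrite Rpow_mult_distr, Rinv_mult.
    assert (H2k : 2 <= 2 ^ (N - 2)).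
    { replace (N - 2)%nat with (S (N - 3)) by lia. simpl. assert (1 <= 2 ^ (N - 3)) by (apply pow_R1_Rle; lra). lra. }
    assert (/ 2 ^ (N - 2) <= / 2) by (apply Rinv_le_contravar; lra).
    assert (0 < / rho ^ (N - 2)) by (apply Rinv_0_lt_compat; auto).
    assert (0 < A / (INR N - 2)) by (apply Rdiv_lt_0_compat; lra).
    replace (A / (INR N - 2) / 2 * / rho ^ (N - 2)) with (A / (INR N - 2) * (/ rho ^ (N - 2) - / 2 * / rho ^ (N - 2))) by (field; lra).
    apply Rmult_le_compat_l; [lra|]. 
    assert (/ 2 ^ (N - 2) * / rho ^ (N - 2) <= / 2 * / rho ^ (N - 2)) by (apply Rmult_le_compat_r; lra).
    lra. }
  assert (Hpos : 0 < B * / rho ^ (N - 2)) by (apply Rmult_lt_0_compat; [|apply Rinv_0_lt_compat]; auto).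
  assert (H3 : Rpower (sol N p c dl rho) (1 - q) <= Rpower (B * / rho ^ (N - 2)) (1 - q)).
  { apply Rpower_base_anti; lra. }
  assert (H4 : Rpower (B * / rho ^ (N - 2)) (1 - q) = Rpower B (1 - q) * Rpower rho (INR (N - 2) * (q - 1))).
  { rewrite <- Rpower_mult_distr by (auto; apply Rinv_0_lt_compat; auto).
    rewrite Rpower_inv_base by auto. rewrite <- (Rpower_pow (N - 2) rho) by lra.
    rewrite Rpower_mult. f_equal. f_equal. ring. }
  assert (H5 : rho ^ 2 = Rpower rho 2).
  { rewrite <- (Rpower_pow 2 rho) by lra. f_equal. }
  assert (H6 : K0 * Rpower rho 2 <= Rpower B (1 - q) * Rpower rho (INR (N - 2) * (q - 1))) by (rewrite <- H5, <- H4; lra).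
  assert (H7 : Rpower rho e <= Rpower B (1 - q) / K0).
  { apply (Rmult_le_reg_l K0); auto. unfold e. 
    replace (K0 * (Rpower B (1 - q) / K0)) with (Rpower B (1 - q)) by (field; lra).
    replace (- (INR (N - 2) * (q - 1))) with (- (INR (N - 2) * (q - 1))) by ring.
    assert (Hm : Rpower rho (- (INR (N - 2) * (q - 1))) * Rpower rho (INR (N - 2) * (q - 1)) = 1).
    { rewrite <- Rpower_plus. replace (- (INR (N - 2) * (q - 1)) + INR (N - 2) * (q - 1)) with 0 by ring.
      apply Rpower_O; lra. }
    pose proof (Rpower_pos' rho (- (INR (N - 2) * (q - 1)))).
    apply (Rmult_le_compat_r (Rpower rho (- (INR (N - 2) * (q - 1))))) in H6; [|lra].
    replace (Rpower B (1 - q) * Rpower rho (INR (N - 2) * (q - 1)) * Rpower rho (- (INR (N - 2) * (q - 1))))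
      with (Rpower B (1 - q) * (Rpower rho (- (INR (N - 2) * (q - 1))) * Rpower rho (INR (N - 2) * (q - 1)))) in H6 by ring.
    rewrite Hm, Rmult_1_r in H6.
    replace (2 - INR (N - 2) * (q - 1)) with (2 + - (INR (N - 2) * (q - 1))) by ring.
    rewrite Rpower_plus. lra. }
  assert (H8 : rho <= Rpower (Rpower B (1 - q) / K0) (1 / e)).
  { rewrite <- (Rpower_root rho e) at 1 by lra. apply Rle_Rpower_l.
    - apply Rlt_le, Rdiv_lt_0_compat; lra.
    - split; [apply Rpower_pos'|auto]. }
  unfold rho in H8. lra.
Qed.

Definition dk (k : nat) := / (INR k + 2).

Lemma dk_range k : 0 < dk k <= 1/2.
Proof.
  unfold dk. pose proof (pos_INR k). split; [apply Rinv_0_lt_compat; lra|].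
  replace (1/2) with (/ 2) by field. apply Rinv_le_contravar; lra.
Qed.

Lemma dk_mono k j : (k <= j)%nat -> dk j <= dk k.
Proof. intros H. unfold dk. apply Rinv_le_contravar; [pose proof (pos_INR k); lra|]. apply le_INR in H. lra. Qed.

Lemma dk_strict k j : (k < j)%nat -> dk j < dk k.
Proof. intros H. unfold dk. apply Rinv_lt_contravar; [pose proof (pos_INR k); pose proof (pos_INR j); nra|]. apply lt_INR in H. lra. Qed.

Lemma dk_small eps : 0 < eps -> exists k, dk k < eps.
Proof.
  intros He. destruct (archimed (/ eps)) as [H1 _].
  exists (Z.to_nat (up (/ eps))). unfold dk.
  assert (Hz : (0 <= up (/ eps))%Z).
  { apply le_IZR. pose proof (Rinv_0_lt_compat eps He). simpl. lra. }
  rewrite INR_IZR_INZ, Z2Nat.id by auto.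
  assert (0 <= IZR (up (/ eps))) by (apply (IZR_le 0); auto).
  rewrite <- (Rinv_inv eps) at 2. apply Rinv_lt_contravar.
  - apply Rmult_lt_0_compat; [apply Rinv_0_lt_compat; auto|]. lra.
  - lra.
Qed.

Lemma sol_neg_1 N p c dl r : (3 <= N)%nat -> 0 < p -> 0 < dl < 1 -> 0 < c -> r <= 0 -> sol N p c dl r = 1.
Proof. intros. rewrite sol_eq by auto. rewrite Jop_nonpos by lra. ring. Qed.

Definition Hfam N p c (rk : nat -> R) :=
  forall k, 0 < rk k /\ sol N p c (dk k) (rk k) = dk k.

Lemma fam_cons N p c rk : (3 <= N)%nat -> 0 < p -> 0 < c -> Hfam N p c rk ->
  forall k j, (k <= j)%nat -> forall r, r <= rk k -> sol N p c (dk j) r = sol N p c (dk k) r.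
Proof.
  intros HN Hp Hc Hf k j Hkj r Hr.
  pose proof (dk_range k). pose proof (dk_range j). pose proof (dk_mono k j Hkj).
  destruct (Rle_dec r 0) as [Hr0|Hr0].
  - rewrite !sol_neg_1 by (auto; lra). auto.
  - destruct (Hf k) as [A B]. apply (sol_consistent N p c (dk k) (dk j) (rk k)); auto; lra.
Qed.

Lemma fam_incr N p c rk : (3 <= N)%nat -> 0 < p -> 0 < c -> Hfam N p c rk ->
  forall k j, (k < j)%nat -> rk k < rk j.
Proof.
  intros HN Hp Hc Hf k j Hkj.
  pose proof (dk_range k). pose proof (dk_range j). pose proof (dk_strict k j Hkj).
  destruct (Hf k) as [A B]. destruct (Hf j) as [C D].
  assert (E : sol N p c (dk j) (rk k) = dk k) by (rewrite (fam_cons N p c rk HN Hp Hc Hf k j); auto; lia || lra).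
  apply Rnot_le_lt. intros Hle.
  destruct (Req_dec (rk j) (rk k)) as [Heq|Hne].
  - rewrite Heq in D. lra.
  - assert (sol N p c (dk j) (rk k) < sol N p c (dk j) (rk j)) by (apply sol_decr; auto; lra). lra.
Qed.

Lemma fam_r0 N p c rk : (3 <= N)%nat -> 0 < p -> 0 < c -> Hfam N p c rk ->
  forall k, sol N p c (dk k) (rk 0%nat) = 1/2.
Proof.
  intros HN Hp Hc Hf k. rewrite (fam_cons N p c rk HN Hp Hc Hf 0 k) by (lia || lra).
  destruct (Hf 0%nat) as [_ B]. rewrite B. unfold dk. simpl. field.
Qed.

Lemma fam_bound N p c rk : (3 <= N)%nat -> 0 < p -> p < INR N / (INR N - 2) -> 0 < c -> Hfam N p c rk ->
  forall k, rk k <= rd_cst N p c (rk 0%nat).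
Proof.
  intros HN Hp Hpn Hc Hf k. destruct (Hf k) as [A B]. destruct (Hf 0%nat) as [C _].
  apply (rd_bound N p c (dk k)); auto. apply dk_range. apply fam_r0; auto.
Qed.

Lemma exists_Rs N p c rk : (3 <= N)%nat -> 0 < p -> p < INR N / (INR N - 2) -> 0 < c -> Hfam N p c rk ->
  exists Rs, (forall k, rk k < Rs) /\ (forall r, r < Rs -> exists k, r < rk k).
Proof.
  intros HN Hp Hpn Hc Hf.
  assert (Hg : Un_growing rk) by (intros n; left; apply (fam_incr N p c rk); auto).
  assert (Hub : has_ub rk).
  { exists (rd_cst N p c (rk 0%nat)). intros x [i ->]. apply fam_bound; auto. }
  destruct (growing_cv rk Hg Hub) as [l Hl].
  exists l. split.
  - intros k. pose proof (growing_ineq rk l Hg Hl (S k)). pose proof (fam_incr N p c rk HN Hp Hc Hf k (S k) ltac:(lia)). lra.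
  - intros r Hr. destruct (Hl (l - r) ltac:(lra)) as [n Hn]. exists n. specialize (Hn n (le_n _)).
    unfold Rdist in Hn. apply Rabs_lt_between in Hn. lra.
Qed.

Definition psiF N p c Rs r :=
  if Rlt_dec r Rs then real (Lim_seq (fun k => sol N p c (dk k) r)) else 0.

Lemma psi_eq N p c rk Rs : (3 <= N)%nat -> 0 < p -> 0 < c -> Hfam N p c rk ->
  (forall k, rk k < Rs) -> forall k r, r <= rk k -> psiF N p c Rs r = sol N p c (dk k) r.
Proof.
  intros HN Hp Hc Hf HRs k r Hr. unfold psiF. destruct (Rlt_dec r Rs) as [_|Hn]; [|specialize (HRs k); lra].
  rewrite <- (Lim_seq_incr_n _ k).
  rewrite (Lim_seq_ext _ (fun _ => sol N p c (dk k) r)).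
  - rewrite Lim_seq_const. reflexivity.
  - intros n. apply (fam_cons N p c rk); auto. lia.
Qed.

Lemma psi_ge Rs N p c r : Rs <= r -> psiF N p c Rs r = 0.
Proof. intros H. unfold psiF. destruct (Rlt_dec r Rs); [lra|auto]. Qed.

Lemma psi_pos N p c rk Rs : (3 <= N)%nat -> 0 < p -> 0 < c -> Hfam N p c rk ->
  (forall k, rk k < Rs) -> (forall r, r < Rs -> exists k, r < rk k) ->
  forall r, r < Rs -> exists k, r < rk k /\ psiF N p c Rs r = sol N p c (dk k) r /\ dk k <= psiF N p c Rs r.
Proof.
  intros HN Hp Hc Hf H1 H2 r Hr. destruct (H2 r Hr) as [k Hk]. exists k.
  rewrite (psi_eq N p c rk Rs HN Hp Hc Hf H1 k r) by lra. split; [auto|]. split; [auto|].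
  pose proof (dk_range k). destruct (Hf k) as [A B].
  destruct (Rle_dec r 0) as [Hr0|Hr0].
  - rewrite sol_neg_1 by (auto; lra). lra.
  - apply (sol_range_rd N p c (dk k) (rk k) r); auto; lra.
Qed.

Lemma psi_left N p c rk Rs : (3 <= N)%nat -> 0 < p -> 0 < c -> Hfam N p c rk ->
  (forall k, rk k < Rs) -> (forall r, r < Rs -> exists k, r < rk k) ->
  forall eps, 0 < eps -> exists d, 0 < d /\ forall r, Rs - d < r < Rs -> 0 < psiF N p c Rs r < eps.
Proof.
  intros HN Hp Hc Hf H1 H2 eps He.
  destruct (dk_small eps He) as [k Hk].
  exists (Rs - rk k). split; [specialize (H1 k); lra|].
  intros r Hr.
  destruct (psi_pos N p c rk Rs HN Hp Hc Hf H1 H2 r ltac:(lra)) as [j [Hj [E G]]].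
  pose proof (dk_range j). split; [lra|].
  assert (Hkj : (k < j)%nat).
  { destruct (le_lt_dec j k) as [Hle|Hlt]; auto. exfalso.
    destruct (le_lt_eq_dec j k Hle) as [Hlt|Heq].
    - pose proof (fam_incr N p c rk HN Hp Hc Hf j k Hlt). lra.
    - subst. lra. }
  rewrite E. destruct (Hf k) as [A B].
  assert (sol N p c (dk j) (rk k) = dk k).
  { rewrite (fam_cons N p c rk HN Hp Hc Hf k j) by (lia || lra). auto. }
  pose proof (dk_range k).
  assert (sol N p c (dk j) r < sol N p c (dk j) (rk k)) by (apply sol_decr; auto; lra). lra.
Qed.

Lemma psi_cont N p c rk Rs : (3 <= N)%nat -> 0 < p -> 0 < c -> Hfam N p c rk ->
  (forall k, rk k < Rs) -> (forall r, r < Rs -> exists k, r < rk k) ->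
  cont (psiF N p c Rs).
Proof.
  intros HN Hp Hc Hf H1 H2 x.
  destruct (Rlt_dec x Rs) as [Hx|Hx].
  - destruct (H2 x Hx) as [k Hk]. pose proof (dk_range k).
    apply cont_eps. intros eps He.
    destruct (cont_eps_rev _ x (sol_cont N p c (dk k) HN Hp ltac:(lra) Hc x) eps He) as [d [Hd Hy]].
    exists (Rmin d (rk k - x)). split; [apply Rmin_pos; lra|].
    intros y Hyx. assert (Rmin d (rk k - x) <= d) by apply Rmin_l. assert (Rmin d (rk k - x) <= rk k - x) by apply Rmin_r.
    apply Rabs_lt_between in Hyx as Hyx'.
    rewrite !(psi_eq N p c rk Rs HN Hp Hc Hf H1 k) by lra. apply Hy. lra.
  - destruct (Req_dec x Rs) as [->|Hne].
    + apply cont_eps. intros eps He.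
      destruct (psi_left N p c rk Rs HN Hp Hc Hf H1 H2 eps He) as [d [Hd Hl]].
      exists d. split; auto. intros y Hy. rewrite (psi_ge Rs N p c Rs) by lra. rewrite Rminus_0_r.
      apply Rabs_lt_between in Hy.
      destruct (Rlt_dec y Rs) as [Hy'|Hy'].
      * specialize (Hl y ltac:(lra)). rewrite Rabs_right; lra.
      * rewrite psi_ge by lra. rewrite Rabs_R0. auto.
    + apply cont_eps. intros eps He. exists (x - Rs). split; [lra|].
      intros y Hy. apply Rabs_lt_between in Hy. rewrite !psi_ge by lra. rewrite Rminus_diag, Rabs_R0. auto.
Qed.

Definition dpsiF N p c Rs r := - c * I2 N (fun t => rpow (psiF N p c Rs t) p) r / r ^ (N - 1).
Definition ddpsiF N p c Rs r := - c * (rpow (psiF N p c Rs r) p - (INR N - 1) * I2 N (fun t => rpow (psiF N p c Rs t) p) r / r ^ N).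

Lemma I2_psi_eq N p c rk Rs : (3 <= N)%nat -> 0 < p -> 0 < c -> Hfam N p c rk ->
  (forall k, rk k < Rs) -> forall k y, 0 < y <= rk k ->
  I2 N (fun t => rpow (psiF N p c Rs t) p) y = I2 N (Gf N p c (dk k)) y /\
  rpow (psiF N p c Rs y) p = Gf N p c (dk k) y.
Proof.
  intros HN Hp Hc Hf H1 k y Hy. pose proof (dk_range k). destruct (Hf k) as [A B].
  split.
  - unfold I2. apply RInt_ext. intros t Ht. rewrite Rmin_left, Rmax_right in Ht by lra.
    rewrite (psi_eq N p c rk Rs HN Hp Hc Hf H1 k) by lra.
    rewrite <- (Gf_on_rd N p c (dk k) (rk k) t) by (auto; lra). reflexivity.
  - rewrite (psi_eq N p c rk Rs HN Hp Hc Hf H1 k) by lra.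
    rewrite <- (Gf_on_rd N p c (dk k) (rk k) y) by (auto; lra). reflexivity.
Qed.

Lemma psi_ode N p c rk Rs : (3 <= N)%nat -> 0 < p -> 0 < c -> Hfam N p c rk ->
  (forall k, rk k < Rs) -> (forall r, r < Rs -> exists k, r < rk k) ->
  forall r, 0 < r < Rs ->
    derivable_pt_lim (psiF N p c Rs) r (dpsiF N p c Rs r) /\
    derivable_pt_lim (dpsiF N p c Rs) r (ddpsiF N p c Rs r) /\
    ddpsiF N p c Rs r + (INR N - 1) / r * dpsiF N p c Rs r = - c * rpow (psiF N p c Rs r) p.
Proof.
  intros HN Hp Hc Hf H1 H2 r Hr.
  destruct (H2 r ltac:(lra)) as [k Hk]. pose proof (dk_range k).
  assert (Hdl : 0 < dk k < 1) by lra.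
  set (d := Rmin r (rk k - r)).
  assert (Hd : 0 < d) by (unfold d; apply Rmin_pos; lra).
  assert (Hd1 : d <= r) by apply Rmin_l. assert (Hd2 : d <= rk k - r) by apply Rmin_r.
  assert (Hloc : forall y, Rabs (y - r) < d -> 0 < y <= rk k).
  { intros y Hy. apply Rabs_lt_between in Hy. lra. }
  assert (Edp : forall y, Rabs (y - r) < d -> dsol N p c (dk k) y = dpsiF N p c Rs y).
  { intros y Hy. unfold dsol, dpsiF. destruct (I2_psi_eq N p c rk Rs HN Hp Hc Hf H1 k y (Hloc y Hy)) as [E _].
    rewrite E. reflexivity. }
  assert (Hr0 : Rabs (r - r) < d) by (rewrite Rminus_diag, Rabs_R0; auto).
  destruct (I2_psi_eq N p c rk Rs HN Hp Hc Hf H1 k r (Hloc r Hr0)) as [E1 E2].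
  assert (Edd : ddpsiF N p c Rs r = ddsol N p c (dk k) r).
  { unfold ddpsiF, ddsol. rewrite E1, E2. reflexivity. }
  split; [|split].
  - rewrite <- (Edp r Hr0).
    apply (dpl_ext_loc (sol N p c (dk k)) _ r _ d Hd).
    + intros y Hy. symmetry. apply (psi_eq N p c rk Rs HN Hp Hc Hf H1 k). pose proof (Hloc y Hy). lra.
    + apply sol_deriv; auto; lra.
  - rewrite Edd. apply (dpl_ext_loc (dsol N p c (dk k)) _ r _ d Hd); [apply Edp|].
    apply dsol_deriv; auto; lra.
  - rewrite Edd, <- (Edp r Hr0), E2. apply sol_ode; auto; lra.
Qed.

Lemma le_constructed N m p c rk Rs : (3 <= N)%nat -> 1 < m -> p = 1 / (m - 1) -> c = (m - 1) / m ->
  Hfam N p c rk -> (forall k, rk k < Rs) -> (forall r, r < Rs -> exists k, r < rk k) ->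
  lane_emden_sol N m 1 (psiF N p c Rs) Rs.
Proof.
  intros HN Hm Ep Ec Hf H1 H2.
  assert (Hp : 0 < p) by (rewrite Ep; apply Rdiv_lt_0_compat; lra).
  assert (Hc : 0 < c) by (rewrite Ec; apply Rdiv_lt_0_compat; lra).
  pose proof (dk_range 0). destruct (Hf 0%nat) as [A0 B0].
  assert (E0 : forall r, r <= rk 0%nat -> psiF N p c Rs r = sol N p c (dk 0) r)
    by (intros; apply (psi_eq N p c rk Rs); auto).
  split; [specialize (H1 0%nat); lra|].
  split; [rewrite E0 by lra; apply sol_0; auto; lra|].
  split.
  { intros eps He. pose proof (INRN2 N HN).
    set (a := c / (INR N - 2)). assert (Ha : 0 < a) by (unfold a; apply Rdiv_lt_0_compat; lra).
    exists (Rmin (rk 0%nat) (eps / (a + 1))). split; [apply Rmin_pos; [lra|apply Rdiv_lt_0_compat; lra]|].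
    intros r Hr. assert (Rmin (rk 0%nat) (eps / (a + 1)) <= rk 0%nat) by apply Rmin_l.
    assert (Rmin (rk 0%nat) (eps / (a + 1)) <= eps / (a + 1)) by apply Rmin_r.
    rewrite E0 by lra.
    pose proof (sol_near1 N p c (dk 0) r HN Hp ltac:(lra) Hc ltac:(lra)) as Hn. fold a in Hn.
    unfold Rdiv at 1. rewrite Rabs_mult, Rabs_Rinv by lra. rewrite (Rabs_right r) by lra.
    apply (Rmult_lt_reg_r r); [lra|]. rewrite Rmult_assoc, Rinv_l, Rmult_1_r by lra.
    eapply Rle_lt_trans; [apply Hn|].
    replace (a * (r ^ 2 / 2)) with (r * (a * r / 2)) by (simpl; field).
    rewrite (Rmult_comm eps). apply Rmult_lt_compat_l; [lra|].
    assert (Har : a * r < (a + 1) * (eps / (a + 1))).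
    { apply Rle_lt_trans with ((a + 1) * r); [nra|]. apply Rmult_lt_compat_l; lra. }
    replace ((a + 1) * (eps / (a + 1))) with eps in Har by (field; lra). lra. }
  split; [apply psi_ge; lra|].
  split.
  { intros eps He. destruct (psi_left N p c rk Rs HN Hp Hc Hf H1 H2 eps He) as [d [Hd Hl]].
    exists d. split; auto. intros r Hr. rewrite (psi_ge Rs N p c Rs) by lra. rewrite Rminus_0_r.
    specialize (Hl r Hr). rewrite Rabs_right; lra. }
  split.
  { intros r Hr. destruct (psi_pos N p c rk Rs HN Hp Hc Hf H1 H2 r ltac:(lra)) as [k [_ [_ G]]].
    pose proof (dk_range k). lra. }
  split.
  { intros r1 r2 Hr1 H12 Hr2. destruct (H2 r2 Hr2) as [k Hk]. pose proof (dk_range k).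
    rewrite !(psi_eq N p c rk Rs HN Hp Hc Hf H1 k) by lra. apply sol_decr; auto; lra. }
  exists (dpsiF N p c Rs), (ddpsiF N p c Rs). intros r Hr.
  destruct (psi_ode N p c rk Rs HN Hp Hc Hf H1 H2 r Hr) as [A [B C]].
  split; auto. split; auto. rewrite C. subst p c. reflexivity.
Qed.

Lemma rpow_cont p : 0 < p -> cont (fun x => rpow x p).
Proof.
  intros Hp x.
  destruct (Rtotal_order x 0) as [Hx|[Hx|Hx]].
  - apply cont_eps. intros eps He. exists (- x). split; [lra|].
    intros y Hy. apply Rabs_lt_between in Hy. rewrite !rpow_nonpos by lra. rewrite Rminus_diag, Rabs_R0; auto.
  - subst. apply cont_eps. intros eps He. exists (Rpower eps (1 / p)). split; [apply Rpower_pos'|].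
    intros y Hy. rewrite (rpow_nonpos 0) by lra. rewrite Rminus_0_r in *.
    destruct (Rle_dec y 0) as [Hy0|Hy0].
    + rewrite rpow_nonpos by lra. rewrite Rabs_R0; auto.
    + rewrite rpow_pos_eq by lra. rewrite Rabs_right by (left; apply Rpower_pos').
      rewrite Rabs_right in Hy by lra.
      rewrite <- (Rpower_root eps p) by auto. rewrite Rpower_mult.
      replace (p * (1 / p)) with ((1 / p) * p) by ring. rewrite <- Rpower_mult.
      apply Rlt_Rpower_l; [auto|]. split; lra.
  - apply (dpl_cont _ _ (p * Rpower x (p - 1))).
    apply (dpl_ext_loc (fun y => Rpower y p) _ x _ x Hx).
    + intros y Hy. apply Rabs_lt_between in Hy. rewrite rpow_pos_eq by lra. auto.
    + apply derivable_pt_lim_power; auto.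
Qed.

Lemma mass_constructed N m p c rk Rs : (3 <= N)%nat -> 1 < m -> p = 1 / (m - 1) -> c = (m - 1) / m ->
  Hfam N p c rk -> (forall k, rk k < Rs) -> (forall r, r < Rs -> exists k, r < rk k) ->
  exists pr : Riemann_integrable (mass_integrand N m (psiF N p c Rs)) 0 Rs, 0 < RiemannInt pr.
Proof.
  intros HN Hm Ep Ec Hf H1 H2.
  assert (Hp : 0 < p) by (rewrite Ep; apply Rdiv_lt_0_compat; lra).
  assert (Hc : 0 < c) by (rewrite Ec; apply Rdiv_lt_0_compat; lra).
  assert (Hcont : cont (mass_integrand N m (psiF N p c Rs))).
  { unfold mass_integrand. rewrite <- Ep. apply cont_mult; [|apply cont_pow].
    apply (cont_comp (psiF N p c Rs) (fun x => rpow x p)).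
    - apply (psi_cont N p c rk Rs); auto.
    - apply rpow_cont; auto. }
  assert (HRs : 0 < Rs) by (destruct (Hf 0%nat); specialize (H1 0%nat); lra).
  exists (ex_RInt_Reals_0 _ _ _ (cont_ex_RInt _ 0 Rs Hcont)).
  rewrite <- RInt_Reals. apply RInt_gt_0; auto.
  intros x Hx. unfold mass_integrand. rewrite <- Ep.
  destruct (psi_pos N p c rk Rs HN Hp Hc Hf H1 H2 x ltac:(lra)) as [k [_ [_ G]]].
  pose proof (dk_range k).
  apply Rmult_lt_0_compat; [rewrite rpow_pos_eq by lra; apply Rpower_pos'|apply pow_lt; lra].
Qed.

Lemma construct_base N m : (3 <= N)%nat -> m > 2 - 2 / INR N ->
  exists psi Rs, lane_emden_sol N m 1 psi Rs /\
    exists pr : Riemann_integrable (mass_integrand N m psi) 0 Rs, 0 < RiemannInt pr.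
Proof.
  intros HN Hm.
  pose proof (INRN2 N HN).
  assert (Hm1 : 1 < m).
  { assert (2 / INR N <= 2 / 3).
    { unfold Rdiv. apply Rmult_le_compat_l; [lra|]. apply Rinv_le_contravar; [lra|].
      replace 3 with (INR 3) by (simpl; ring). apply le_INR; auto. }
    lra. }
  set (p := 1 / (m - 1)). set (c := (m - 1) / m).
  assert (Hp : 0 < p) by (unfold p; apply Rdiv_lt_0_compat; lra).
  assert (Hc : 0 < c) by (unfold c; apply Rdiv_lt_0_compat; lra).
  assert (Hpn : p < INR N / (INR N - 2)).
  { unfold p. assert (HN0 : 0 < INR N) by lra.
    assert (m - 1 > (INR N - 2) / INR N).
    { replace ((INR N - 2) / INR N) with (1 - 2 / INR N) by (field; lra). lra. }
    replace (INR N / (INR N - 2)) with (1 / ((INR N - 2) / INR N)) by (field; lra).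
    unfold Rdiv. apply Rmult_lt_compat_l; [lra|]. apply Rinv_lt_contravar; [|lra].
    apply Rmult_lt_0_compat; [apply Rdiv_lt_0_compat|]; lra. }
  assert (Hex : forall k, exists r, 0 < r /\ sol N p c (dk k) r = dk k).
  { intros k. pose proof (dk_range k). apply rd_exists; auto; lra. }
  destruct (functional_choice _ Hex) as [rk Hrk].
  assert (Hf : Hfam N p c rk) by exact Hrk.
  destruct (exists_Rs N p c rk HN Hp Hpn Hc Hf) as [Rs [H1 H2]].
  exists (psiF N p c Rs), Rs. split.
  - apply (le_constructed N m p c rk Rs); auto.
  - apply (mass_constructed N m p c rk Rs); auto.
Qed.

Lemma sphere_pos n : 0 < sphere_area (S n) /\ 0 < sphere_area (S (S n)).
Proof.
  induction n as [|n [IH1 IH2]].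
  - simpl. split; [lra|]. pose proof PI_RGT_0. lra.
  - split; auto. change (sphere_area (S (S (S n)))) with (2 * PI / INR (S n) * sphere_area (S n)).
    pose proof PI_RGT_0. apply Rmult_lt_0_compat; auto. apply Rdiv_lt_0_compat; [lra|apply lt_0_INR; lia].
Qed.

Lemma sphere_pos' N : (3 <= N)%nat -> 0 < sphere_area N.
Proof. intros HN. replace N with (S (N - 1)) by lia. apply sphere_pos. Qed.

Lemma scale_factor p a N : 0 < a ->
  Rpower a p / Rpower a ((p - 1) / 2) ^ N =
  Rpower a (p - INR N * (p - 1) / 2).
Proof.
  intros Ha. rewrite <- Rpower_pow by apply Rpower_pos'. rewrite Rpower_mult.
  unfold Rdiv at 1. rewrite <- Rpower_Ropp, <- Rpower_plus. f_equal. field.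
Qed.

Theorem mainTheorem4 (N : nat) (m : R) (HN : (3 <= N)%nat)
  (Hm : m > 2 - 2 / INR N) (M : R) (HM : M > 0) :
  exists! alpha : R, alpha > 0 /\
    exists (psi : R -> R) (Rs : R),
      lane_emden_sol N m alpha psi Rs /\
      exists pr : Riemann_integrable (mass_integrand N m psi) 0 Rs,
        sphere_area N * RiemannInt pr = M.
Proof.
  destruct (construct_base N m HN Hm) as [phi [R1 [Hphi [pr1 HM1]]]].
  pose proof (INRN2 N HN) as HN2.
  assert (Hm1 : 1 < m).
  { assert (2 / INR N <= 2 / 3).
    { unfold Rdiv. apply Rmult_le_compat_l; [lra|]. apply Rinv_le_contravar; [lra|].
      replace 3 with (INR 3) by (simpl; ring). apply le_INR; auto. }
    lra. }
  set (p := 1 / (m - 1)).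
  assert (Hpn : p < INR N / (INR N - 2)).
  { unfold p. assert (HN0 : 0 < INR N) by lra.
    assert (m - 1 > (INR N - 2) / INR N).
    { replace ((INR N - 2) / INR N) with (1 - 2 / INR N) by (field; lra). lra. }
    replace (INR N / (INR N - 2)) with (1 / ((INR N - 2) / INR N)) by (field; lra).
    unfold Rdiv. apply Rmult_lt_compat_l; [lra|]. apply Rinv_lt_contravar; [|lra].
    apply Rmult_lt_0_compat; [apply Rdiv_lt_0_compat|]; lra. }
  set (e := p - INR N * (p - 1) / 2).
  assert (He : 0 < e).
  { unfold e. assert (p * (INR N - 2) < INR N).
    { apply (Rmult_lt_compat_r (INR N - 2)) in Hpn; auto. unfold Rdiv in Hpn. rewrite Rmult_assoc, Rinv_l in Hpn; lra. }
    lra. }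
  pose proof (sphere_pos' N HN) as Hw.
  set (w := sphere_area N) in *.
  set (M1 := RiemannInt pr1) in *.
  set (a0 := Rpower (M / (w * M1)) (1 / e)).
  assert (Ha0 : 0 < a0) by apply Rpower_pos'.
  assert (Ea0 : Rpower a0 e = M / (w * M1)).
  { unfold a0. rewrite Rpower_mult. replace (1 / e * e) with 1 by (field; lra).
    apply Rpower_1. apply Rdiv_lt_0_compat; [lra|apply Rmult_lt_0_compat; lra]. }
  assert (Hmass : forall a (Ha : 0 < a), exists pr : Riemann_integrable
       (mass_integrand N m (fun r => a * phi (Rpower a ((1 / (m - 1) - 1) / 2) * r))) 0 (R1 / Rpower a ((1 / (m - 1) - 1) / 2)),
       RiemannInt pr = Rpower a e * M1).
  { intros a Ha. destruct (mass_scale N m phi R1 a pr1 HN Ha) as [pr Hpr]. exists pr. rewrite Hpr.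
    rewrite (scale_factor (1 / (m - 1))) by auto. reflexivity. }
  exists a0. split.
  - split; [lra|].
    exists (fun r => a0 * phi (Rpower a0 ((1 / (m - 1) - 1) / 2) * r)), (R1 / Rpower a0 ((1 / (m - 1) - 1) / 2)).
    split; [apply le_scale; auto|].
    destruct (Hmass a0 Ha0) as [pr Hpr]. exists pr. rewrite Hpr, Ea0. field. split; lra.
  - intros y [Hy [psi [Rs [Hpsi [pr Hpr]]]]].
    pose proof (le_scale N m phi R1 y HN Hm1 Hy Hphi) as Hsc. simpl in Hsc.
    destruct (le_unique N m y psi Rs _ _ HN Hm1 Hy Hpsi Hsc) as [ERs Eq].
    subst Rs.
    destruct (Hmass y Hy) as [pr' Hpr'].
    assert (Eint : RiemannInt pr = RiemannInt pr').
    { apply RiemannInt_ext. intros x Hx. unfold mass_integrand. rewrite Eq; auto.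
      rewrite Rmin_left, Rmax_right in Hx; [lra| |]; apply Rlt_le, Rdiv_lt_0_compat; try apply Rpower_pos';
        destruct Hphi; lra. }
    rewrite Eint, Hpr' in Hpr.
    assert (Rpower y e = Rpower a0 e).
    { rewrite Ea0. apply (Rmult_eq_reg_l (w * M1)); [|apply Rgt_not_eq, Rmult_lt_0_compat; lra].
      rewrite <- Hpr. field. split; lra. }
    rewrite <- (Rpower_root a0 e), <- (Rpower_root y e) by auto. rewrite H. reflexivity.
Qed.
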